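(* Let $f$ be a transcendental entire function on $\mathbb{C}$ and let $P,Q$ be polynomials such that $P-Q$ is non-constant. Then $f+P$ and $f+Q$ are algebraically independent over $\mathbb{C}$. *)

(* Defs.v *)
From Stdlib Require Import Reals List.
Open Scope R_scope.

Definition Cx : Type := (R * R)%type.
Definition C0 : Cx := (0, 0).
Definition C1 : Cx := (1, 0).
Definition Cadd (z w : Cx) : Cx := (fst z + fst w, snd z + snd w).
Definition Copp (z : Cx) : Cx := (- fst z, - snd z).
Definition Csub (z w : Cx) : Cx := Cadd z (Copp w).
Definition Cmul (z w : Cx) : Cx :=
  (fst z * fst w - snd z * snd w, fst z * snd w + snd z * fst w).
Definition Cnorm (z : Cx) : R := sqrt (fst z * fst z + snd z * snd z).
Fixpoint Cpow (z : Cx) (n : nat) : Cx :=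
  match n with O => C1 | S k => Cmul z (Cpow z k) end.

Definition entire (f : Cx -> Cx) : Prop :=
  forall z : Cx, exists l : Cx, forall eps : R, 0 < eps ->
    exists delta : R, 0 < delta /\
      forall h : Cx, Cnorm h < delta ->
        Cnorm (Csub (Csub (f (Cadd z h)) (f z)) (Cmul l h)) <= eps * Cnorm h.

(* Univariate polynomials over C as coefficient lists [a0; a1; ...]. *)
Definition Cpoly := list Cx.
Definition coef (p : Cpoly) (k : nat) : Cx := nth k p C0.
Fixpoint peval (p : Cpoly) (z : Cx) : Cx :=
  match p with nil => C0 | a :: q => Cadd a (Cmul z (peval q z)) end.

Definition diff_nonconstant (P Q : Cpoly) : Prop :=
  exists k : nat, (1 <= k)%nat /\ coef P k <> coef Q k.

Definition transcendental_entire (f : Cx -> Cx) : Prop :=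
  entire f /\ ~ exists p : Cpoly, forall z, f z = peval p z.

(* Bivariate polynomials over C: a coefficient array c i j, with i, j <= N
   (c i j is the coefficient of X^i Y^j). *)
Fixpoint Csum (n : nat) (F : nat -> Cx) : Cx :=
  match n with O => C0 | S k => Cadd (Csum k F) (F k) end.

Definition beval (N : nat) (c : nat -> nat -> Cx) (x y : Cx) : Cx :=
  Csum (S N) (fun i => Csum (S N) (fun j => Cmul (c i j) (Cmul (Cpow x i) (Cpow y j)))).

Definition alg_independent (g h : Cx -> Cx) : Prop :=
  forall (N : nat) (c : nat -> nat -> Cx),
    (exists i j, (i <= N)%nat /\ (j <= N)%nat /\ c i j <> C0) ->
    exists z : Cx, beval N c (g z) (h z) <> C0.

(* Main.v *)
Require Import Defs.
From Stdlib Require Import Reals List Lra Lia Psatz Classical.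
From Coquelicot Require Import Coquelicot.
Open Scope R_scope.

Lemma Cnorm_Cmod z : Cnorm z = Cmod z.
Proof. unfold Cnorm, Cmod. f_equal. simpl. ring. Qed.

Lemma Cmod_le_abs (x : C) : Cmod x <= Rabs (fst x) + Rabs (snd x).
Proof.
  unfold Cmod. rewrite <- (sqrt_pow2 (Rabs (fst x) + Rabs (snd x)))
    by (pose proof (Rabs_pos (fst x)); pose proof (Rabs_pos (snd x)); lra).
  apply sqrt_le_1_alt.
  pose proof (Rabs_pos (fst x)); pose proof (Rabs_pos (snd x)).
  rewrite <- (pow2_abs (fst x)), <- (pow2_abs (snd x)). nra.
Qed.

Lemma fst_le_Cmod (x : C) : Rabs (fst x) <= Cmod x.
Proof. pose proof (Rmax_Cmod x). pose proof (Rmax_l (Rabs (fst x)) (Rabs (snd x))). lra. Qed.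
Lemma snd_le_Cmod (x : C) : Rabs (snd x) <= Cmod x.
Proof. pose proof (Rmax_Cmod x). pose proof (Rmax_r (Rabs (fst x)) (Rabs (snd x))). lra. Qed.

Lemma Cmod_sub_sym (x y : C) : Cmod (x - y) = Cmod (y - x).
Proof. replace (x - y)%C with (- (y - x))%C by ring. apply Cmod_opp. Qed.

Lemma Cmod_tri_sub (x y : C) : Cmod x - Cmod y <= Cmod (x - y).
Proof. pose proof (Cmod_triangle (x - y) y). replace (x - y + y)%C with x in H by ring. lra. Qed.

Lemma Cmod_sub_le (x y : C) : Cmod (x - y) <= Cmod x + Cmod y.
Proof. pose proof (Cmod_triangle x (- y)). rewrite Cmod_opp in H. exact H. Qed.

Definition Dat (g : C -> C) (z l : C) : Prop :=
  forall eps : R, 0 < eps -> exists delta : R, 0 < delta /\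
    forall h : C, Cmod h < delta -> Cmod (g (z + h) - g z - l * h)%C <= eps * Cmod h.
Definition Dif (g : C -> C) (z : C) : Prop := exists l, Dat g z l.

Definition Ccont (g : C -> C) (z : C) : Prop :=
  forall eps : R, 0 < eps -> exists delta : R, 0 < delta /\
    forall h : C, Cmod h < delta -> Cmod (g (z + h) - g z)%C < eps.

Lemma entire_Dif f : entire f -> forall z, Dif f z.
Proof.
  intros Hf z. destruct (Hf z) as [l Hl]. exists l. intros eps Heps.
  destruct (Hl eps Heps) as [d [Hd H]]. exists d. split; auto.
  intros h Hh. rewrite <- Cnorm_Cmod in Hh. specialize (H h Hh).
  rewrite !Cnorm_Cmod in H. exact H.
Qed.

Lemma Dat_bound g z l : Dat g z l -> exists delta, 0 < delta /\
  forall h, Cmod h < delta -> Cmod (g (z + h) - g z)%C <= (Cmod l + 1) * Cmod h.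
Proof.
  intros H. destruct (H 1 Rlt_0_1) as [d [Hd Hh]]. exists d; split; auto.
  intros h Hlt. specialize (Hh h Hlt).
  replace (g (z + h) - g z)%C with ((g (z + h) - g z - l * h) + l * h)%C by ring.
  eapply Rle_trans. apply Cmod_triangle. rewrite Cmod_mult. lra.
Qed.

Lemma Dif_cont g z : Dif g z -> Ccont g z.
Proof.
  intros [l H]. destruct (Dat_bound _ _ _ H) as [d [Hd Hb]].
  intros eps Heps. pose proof (Cmod_ge_0 l).
  exists (Rmin d (eps / (Cmod l + 2))). split.
  { apply Rmin_pos; auto. apply Rdiv_lt_0_compat; lra. }
  intros h Hh. pose proof (Rmin_l d (eps / (Cmod l + 2))).
  pose proof (Rmin_r d (eps / (Cmod l + 2))).
  eapply Rle_lt_trans. apply Hb. lra.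
  pose proof (Cmod_ge_0 h).
  assert (Cmod h < eps / (Cmod l + 2)) by lra.
  apply Rlt_le_trans with ((Cmod l + 2) * (eps / (Cmod l + 2))).
  2: { right. field. lra. }
  apply Rle_lt_trans with ((Cmod l + 1) * (eps / (Cmod l + 2))).
  - apply Rmult_le_compat_l; lra.
  - apply Rmult_lt_compat_r. apply Rdiv_lt_0_compat; lra. lra.
Qed.

Lemma Dat_const c z : Dat (fun _ => c) z 0.
Proof.
  intros eps Heps. exists 1. split; [lra|]. intros h _.
  replace (c - c - 0 * h)%C with (RtoC 0) by ring. rewrite Cmod_0.
  pose proof (Cmod_ge_0 h). nra.
Qed.

Lemma Dat_id z : Dat (fun w => w) z 1.
Proof.
  intros eps Heps. exists 1. split; [lra|]. intros h _.
  replace (z + h - z - 1 * h)%C with (RtoC 0) by ring. rewrite Cmod_0.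
  pose proof (Cmod_ge_0 h). nra.
Qed.

Lemma Dat_add g k z l m : Dat g z l -> Dat k z m -> Dat (fun w => g w + k w)%C z (l + m)%C.
Proof.
  intros Hg Hk eps Heps.
  destruct (Hg (eps/2)) as [d1 [Hd1 H1]]; [lra|].
  destruct (Hk (eps/2)) as [d2 [Hd2 H2]]; [lra|].
  exists (Rmin d1 d2). split. apply Rmin_pos; auto.
  intros h Hh. pose proof (Rmin_l d1 d2). pose proof (Rmin_r d1 d2).
  replace (g (z + h) + k (z + h) - (g z + k z) - (l + m) * h)%C with
    ((g (z + h) - g z - l * h) + (k (z + h) - k z - m * h))%C by ring.
  eapply Rle_trans. apply Cmod_triangle.
  specialize (H1 h ltac:(lra)). specialize (H2 h ltac:(lra)). lra.
Qed.

Lemma Dat_scal c g z l : Dat g z l -> Dat (fun w => c * g w)%C z (c * l)%C.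
Proof.
  intros Hg eps Heps. pose proof (Cmod_ge_0 c) as Hc0.
  destruct (Hg (eps / (Cmod c + 1))) as [d [Hd H]].
  { apply Rdiv_lt_0_compat; lra. }
  exists d. split; auto. intros h Hh.
  replace (c * g (z + h) - c * g z - c * l * h)%C with (c * (g (z + h) - g z - l * h))%C by ring.
  rewrite Cmod_mult. specialize (H h Hh). pose proof (Cmod_ge_0 h).
  apply Rle_trans with (Cmod c * (eps / (Cmod c + 1) * Cmod h)).
  apply Rmult_le_compat_l; auto.
  replace (Cmod c * (eps / (Cmod c + 1) * Cmod h)) with ((Cmod c / (Cmod c + 1)) * (eps * Cmod h)) by (field; lra).
  rewrite <- (Rmult_1_l (eps * Cmod h)) at 2. apply Rmult_le_compat_r.
  nra. apply Rcomplements.Rle_div_l; lra.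
Qed.

Lemma Dat_mul g k z l m : Dat g z l -> Dat k z m ->
  Dat (fun w => g w * k w)%C z (l * k z + g z * m)%C.
Proof.
  intros Hg Hk eps Heps.
  destruct (Dat_bound _ _ _ Hk) as [d0 [Hd0 Hb]].
  pose proof (Cmod_ge_0 l) as Hl0. pose proof (Cmod_ge_0 m) as Hm0.
  pose proof (Cmod_ge_0 (k z)) as Hkz. pose proof (Cmod_ge_0 (g z)) as Hgz.
  set (A := Cmod (k z) + 1). set (B := Cmod (g z) + 1). set (L := (Cmod l + 1) * (Cmod m + 1)).
  assert (HA : 0 < A) by (unfold A; lra). assert (HB : 0 < B) by (unfold B; lra).
  assert (HL : 0 < L) by (unfold L; nra).
  destruct (Hg (eps / (3 * A))) as [d1 [Hd1 H1]]. apply Rdiv_lt_0_compat; lra.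
  destruct (Hk (eps / (3 * B))) as [d2 [Hd2 H2]]. apply Rdiv_lt_0_compat; lra.
  set (d3 := Rmin 1 (eps / (3 * L)) / (Cmod m + 1)).
  assert (Hd3 : 0 < d3). { unfold d3. apply Rdiv_lt_0_compat; [|lra]. apply Rmin_pos. lra. apply Rdiv_lt_0_compat; lra. }
  exists (Rmin (Rmin d0 d1) (Rmin d2 d3)). split.
  { repeat apply Rmin_pos; auto. }
  intros h Hh.
  pose proof (Rmin_l (Rmin d0 d1) (Rmin d2 d3)). pose proof (Rmin_r (Rmin d0 d1) (Rmin d2 d3)).
  pose proof (Rmin_l d0 d1). pose proof (Rmin_r d0 d1). pose proof (Rmin_l d2 d3). pose proof (Rmin_r d2 d3).
  pose proof (Cmod_ge_0 h) as Hh0.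
  specialize (H1 h ltac:(lra)). specialize (H2 h ltac:(lra)). specialize (Hb h ltac:(lra)).
  replace (g (z + h) * k (z + h) - g z * k z - (l * k z + g z * m) * h)%C with
    ((g (z + h) - g z - l * h) * k (z + h) + g z * (k (z + h) - k z - m * h)
     + l * h * (k (z + h) - k z))%C by ring.
  assert (Hmh : (Cmod m + 1) * Cmod h <= Rmin 1 (eps / (3 * L))).
  { assert (Hx : Cmod h < d3) by lra. unfold d3 in Hx.
    apply Rlt_le. apply (Rmult_lt_compat_l (Cmod m + 1)) in Hx; [|lra].
    replace ((Cmod m + 1) * (Rmin 1 (eps / (3 * L)) / (Cmod m + 1))) with (Rmin 1 (eps / (3 * L))) in Hx by (field; lra). exact Hx. }
  pose proof (Rmin_l 1 (eps / (3 * L))). pose proof (Rmin_r 1 (eps / (3 * L))).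
  assert (Hkk : Cmod (k (z + h)%C) <= A).
  { replace (k (z + h)%C) with ((k (z + h) - k z) + k z)%C by ring.
    eapply Rle_trans. apply Cmod_triangle. unfold A. nra. }
  eapply Rle_trans. apply Cmod_triangle.
  eapply Rle_trans. apply Rplus_le_compat_r. apply Cmod_triangle.
  rewrite !Cmod_mult.
  assert (T1 : Cmod (g (z + h) - g z - l * h)%C * Cmod (k (z + h)%C) <= eps / 3 * Cmod h).
  { apply Rle_trans with (eps / (3 * A) * Cmod h * A).
    apply Rmult_le_compat; auto using Cmod_ge_0.
    right. field. lra. }
  assert (T2 : Cmod (g z) * Cmod (k (z + h) - k z - m * h)%C <= eps / 3 * Cmod h).
  { apply Rle_trans with (B * (eps / (3 * B) * Cmod h)).
    apply Rmult_le_compat; auto using Cmod_ge_0. unfold B; lra.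
    right. field. lra. }
  assert (T3 : Cmod l * Cmod h * Cmod (k (z + h) - k z)%C <= eps / 3 * Cmod h).
  { apply Rle_trans with ((Cmod l + 1) * Cmod h * ((Cmod m + 1) * Cmod h)).
    pose proof (Cmod_ge_0 (k (z + h) - k z)%C).
    apply Rmult_le_compat; try nra.
    apply Rle_trans with ((Cmod l + 1) * Cmod h * (eps / (3 * L))).
    apply Rmult_le_compat_l. nra. lra.
    unfold L. replace ((Cmod l + 1) * Cmod h * (eps / (3 * ((Cmod l + 1) * (Cmod m + 1)))))
      with ((eps / 3 * Cmod h) * / (Cmod m + 1)) by (field; lra).
    rewrite <- (Rmult_1_r (eps / 3 * Cmod h)) at 2. apply Rmult_le_compat_l. nra.
    rewrite <- Rinv_1. apply Rinv_le_contravar; lra. }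
  lra.
Qed.

Lemma Dat_inv_lin u z : z <> u -> Dat (fun w => / (w - u))%C z (- / ((z - u) * (z - u)))%C.
Proof.
  intros Hzu eps Heps.
  assert (Hn : (z - u)%C <> 0). { intro E. apply Hzu. replace z with ((z - u) + u)%C by ring. rewrite E. ring. }
  set (r := Cmod (z - u)). assert (Hr : 0 < r) by (apply Cmod_gt_0; auto).
  exists (Rmin (r / 2) (eps * r * r * r / 2)). split.
  { apply Rmin_pos; apply Rdiv_lt_0_compat; try lra. repeat apply Rmult_lt_0_compat; auto. }
  intros h Hh. pose proof (Rmin_l (r / 2) (eps * r * r * r / 2)). pose proof (Rmin_r (r / 2) (eps * r * r * r / 2)).
  pose proof (Cmod_ge_0 h) as Hh0.
  assert (Hzh : Cmod (z + h - u)%C >= r / 2).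
  { pose proof (Cmod_tri_sub (z - u) (- h)). replace (z - u - - h)%C with (z + h - u)%C in H1 by ring.
    rewrite Cmod_opp in H1. fold r in H1. lra. }
  assert (Hn2 : (z + h - u)%C <> 0). { intro E. rewrite E, Cmod_0 in Hzh. lra. }
  replace (/ (z + h - u) - / (z - u) - - / ((z - u) * (z - u)) * h)%C with
     (h * h * / ((z - u) * (z - u) * (z + h - u)))%C by (field; auto).
  rewrite Cmod_mult, Cmod_mult, Cmod_inv, !Cmod_mult.
  2: { repeat apply Cmult_neq_0; auto. }
  fold r.
  assert (Hq : Cmod (z + h - u)%C > 0) by lra.
  apply Rle_trans with (Cmod h * Cmod h * / (r * r * (r / 2))).
  - apply Rmult_le_compat_l. nra. apply Rinv_le_contravar.
    repeat apply Rmult_lt_0_compat; lra. apply Rmult_le_compat_l; nra.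
  - replace (Cmod h * Cmod h * / (r * r * (r / 2))) with ((Cmod h * 2 / (r * r * r)) * Cmod h) by (field; lra).
    apply Rmult_le_compat_r; auto.
    apply Rcomplements.Rle_div_l. repeat apply Rmult_lt_0_compat; lra.
    nra.
Qed.

Lemma Dif_mul g k z : Dif g z -> Dif k z -> Dif (fun w => g w * k w)%C z.
Proof. intros [l Hl] [m Hm]. eexists. apply Dat_mul; eauto. Qed.
Lemma Dif_add g k z : Dif g z -> Dif k z -> Dif (fun w => g w + k w)%C z.
Proof. intros [l Hl] [m Hm]. eexists. apply Dat_add; eauto. Qed.
Lemma Dif_scal c g z : Dif g z -> Dif (fun w => c * g w)%C z.
Proof. intros [l Hl]. eexists. apply Dat_scal; eauto. Qed.
Lemma Dif_const c z : Dif (fun _ => c) z.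
Proof. eexists. apply Dat_const. Qed.
Lemma Dif_id z : Dif (fun w => w) z.
Proof. eexists. apply Dat_id. Qed.
Lemma Dif_inv_lin u z : z <> u -> Dif (fun w => / (w - u))%C z.
Proof. intros H. eexists. apply Dat_inv_lin; auto. Qed.
Lemma Dif_ext g k z : (forall w, g w = k w) -> Dif g z -> Dif k z.
Proof. intros E [l H]. exists l. intros eps He. destruct (H eps He) as [d [Hd Hh]].
  exists d. split; auto. intros h Hx. rewrite <- !E. auto. Qed.
Lemma Dif_sub g k z : Dif g z -> Dif k z -> Dif (fun w => g w - k w)%C z.
Proof. intros Hg Hk. apply Dif_ext with (fun w => g w + (-1) * k w)%C.
  intros; ring. apply Dif_add; auto. apply Dif_scal; auto. Qed.

Definition CI (g : R -> C) (a b : R) : C :=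
  (RInt (fun t => fst (g t)) a b, RInt (fun t => snd (g t)) a b).
Definition cint (g : R -> C) (a b : R) : Prop :=
  ex_RInt (fun t => fst (g t)) a b /\ ex_RInt (fun t => snd (g t)) a b.


Lemma Cmod_im t : Cmod (0, t) = Rabs t.
Proof. unfold Cmod. simpl. rewrite <- sqrt_Rsqr_abs. f_equal. unfold Rsqr. ring. Qed.

Lemma Ccont_h g y x0 : Ccont g (x0, y) ->
  continuous (fun x => fst (g (x, y))) x0 /\ continuous (fun x => snd (g (x, y))) x0.
Proof.
  intros Hc. split; apply continuity_pt_filterlim; intros eps Heps;
  destruct (Hc eps Heps) as [d [Hd H]]; exists d; split; auto;
  intros x [_ Hx]; change R in x; unfold R_dist in *;
  specialize (H (RtoC (x - x0))); rewrite Cmod_R in H; specialize (H Hx);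
  replace ((x0, y) + RtoC (x - x0))%C with (x, y) in H
    by (apply injective_projections; simpl; ring).
  - eapply Rle_lt_trans; [|exact H]. apply (fst_le_Cmod (g (x, y) - g (x0, y))%C).
  - eapply Rle_lt_trans; [|exact H]. apply (snd_le_Cmod (g (x, y) - g (x0, y))%C).
Qed.

Lemma Ccont_v g x y0 : Ccont g (x, y0) ->
  continuous (fun y => fst (g (x, y))) y0 /\ continuous (fun y => snd (g (x, y))) y0.
Proof.
  intros Hc. split; apply continuity_pt_filterlim; intros eps Heps;
  destruct (Hc eps Heps) as [d [Hd H]]; exists d; split; auto;
  intros y [_ Hy]; change R in y; unfold R_dist in *;
  specialize (H (0, y - y0)); rewrite Cmod_im in H; specialize (H Hy);
  replace ((x, y0) + (0, (y - y0)%R))%C with (x, y) in H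
    by (apply injective_projections; simpl; ring).
  - eapply Rle_lt_trans; [|exact H]. apply (fst_le_Cmod (g (x, y) - g (x, y0))%C).
  - eapply Rle_lt_trans; [|exact H]. apply (snd_le_Cmod (g (x, y) - g (x, y0))%C).
Qed.

Lemma cint_h g y a b : a <= b -> (forall x, a <= x <= b -> Ccont g (x, y)) ->
  cint (fun x => g (x, y)) a b.
Proof.
  intros Hab H. split; apply (ex_RInt_continuous (V := R_CompleteNormedModule)); rewrite Rmin_left, Rmax_right by lra;
  intros z Hz; apply (Ccont_h g y z (H z Hz)).
Qed.

Lemma cint_v g x a b : a <= b -> (forall y, a <= y <= b -> Ccont g (x, y)) ->
  cint (fun y => g (x, y)) a b.
Proof.
  intros Hab H. split; apply (ex_RInt_continuous (V := R_CompleteNormedModule)); rewrite Rmin_left, Rmax_right by lra;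
  intros z Hz; apply (Ccont_v g x z (H z Hz)).
Qed.

Lemma cint_sub g a b c : a <= b <= c -> cint g a c -> cint g a b /\ cint g b c.
Proof.
  intros Habc [H1 H2]. split; split.
  eapply (ex_RInt_Chasles_1 (V := R_CompleteNormedModule)); eauto. eapply (ex_RInt_Chasles_1 (V := R_CompleteNormedModule)); eauto.
  eapply (ex_RInt_Chasles_2 (V := R_CompleteNormedModule)); eauto. eapply (ex_RInt_Chasles_2 (V := R_CompleteNormedModule)); eauto.
Qed.

Lemma CI_plus g k a b : cint g a b -> cint k a b ->
  CI (fun t => g t + k t)%C a b = (CI g a b + CI k a b)%C.
Proof.
  intros [g1 g2] [k1 k2]. unfold CI. apply injective_projections; simpl.
  - rewrite <- (RInt_plus (V := R_CompleteNormedModule)); auto.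
  - rewrite <- (RInt_plus (V := R_CompleteNormedModule)); auto.
Qed.

Lemma CI_scal c g a b : cint g a b ->
  CI (fun t => c * g t)%C a b = (c * CI g a b)%C.
Proof.
  intros [g1 g2]. unfold CI. apply injective_projections; simpl.
  - transitivity (RInt (fun t => minus (scal (fst c) (fst (g t))) (scal (snd c) (snd (g t)))) a b).
    apply RInt_ext. intros. reflexivity.
    rewrite (RInt_minus (V := R_CompleteNormedModule)).
    rewrite !(RInt_scal (V := R_CompleteNormedModule)) by auto. reflexivity.
    apply (ex_RInt_scal (V := R_CompleteNormedModule)); auto.
    apply (ex_RInt_scal (V := R_CompleteNormedModule)); auto.
  - transitivity (RInt (fun t => plus (scal (fst c) (snd (g t))) (scal (snd c) (fst (g t)))) a b).
    apply RInt_ext. intros. reflexivity.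
    rewrite (RInt_plus (V := R_CompleteNormedModule)).
    rewrite !(RInt_scal (V := R_CompleteNormedModule)) by auto. reflexivity.
    apply (ex_RInt_scal (V := R_CompleteNormedModule)); auto.
    apply (ex_RInt_scal (V := R_CompleteNormedModule)); auto.
Qed.

Lemma cint_plus g k a b : cint g a b -> cint k a b -> cint (fun t => g t + k t)%C a b.
Proof.
  intros [g1 g2] [k1 k2]. split.
  apply (ex_RInt_plus (V := R_CompleteNormedModule) (fun t => fst (g t)) (fun t => fst (k t))); auto.
  apply (ex_RInt_plus (V := R_CompleteNormedModule) (fun t => snd (g t)) (fun t => snd (k t))); auto.
Qed.

Lemma cint_scal c g a b : cint g a b -> cint (fun t => c * g t)%C a b.
Proof.
  intros [g1 g2]. split.
  - apply (ex_RInt_minus (V := R_CompleteNormedModule) (fun t => scal (fst c) (fst (g t))) (fun t => scal (snd c) (snd (g t))));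
    apply (ex_RInt_scal (V := R_CompleteNormedModule)); auto.
  - apply (ex_RInt_plus (V := R_CompleteNormedModule) (fun t => scal (fst c) (snd (g t))) (fun t => scal (snd c) (fst (g t))));
    apply (ex_RInt_scal (V := R_CompleteNormedModule)); auto.
Qed.

Lemma CI_Chasles g a b c : cint g a b -> cint g b c -> (CI g a b + CI g b c)%C = CI g a c.
Proof.
  intros [g1 g2] [k1 k2]. unfold CI. apply injective_projections; simpl.
  - apply (RInt_Chasles (V := R_CompleteNormedModule)); auto.
  - apply (RInt_Chasles (V := R_CompleteNormedModule)); auto.
Qed.

Lemma CI_ext g k a b : a <= b -> (forall t, a <= t <= b -> g t = k t) -> CI g a b = CI k a b.
Proof.
  intros Hab H. unfold CI. f_equal; apply RInt_ext; rewrite Rmin_left, Rmax_right by lra;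
  intros x Hx; rewrite H; auto; lra.
Qed.

Lemma CI_bound g a b M : a <= b -> cint g a b -> (forall t, a <= t <= b -> Cmod (g t) <= M) ->
  Cmod (CI g a b) <= 2 * (b - a) * M.
Proof.
  intros Hab [g1 g2] HM. eapply Rle_trans. apply Cmod_le_abs. unfold CI; simpl.
  assert (A1 : Rabs (RInt (fun t => fst (g t)) a b) <= (b - a) * M).
  { apply abs_RInt_le_const; auto. intros t Ht. eapply Rle_trans. apply fst_le_Cmod. auto. }
  assert (A2 : Rabs (RInt (fun t => snd (g t)) a b) <= (b - a) * M).
  { apply abs_RInt_le_const; auto. intros t Ht. eapply Rle_trans. apply snd_le_Cmod. auto. }
  lra.
Qed.

Definition Hs (g : C -> C) y a b := CI (fun x => g (x, y)) a b.
Definition Vs (g : C -> C) x a b := (Ci * CI (fun y => g (x, y)) a b)%C.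
Definition RI (g : C -> C) x0 x1 y0 y1 :=
  (Hs g y0 x0 x1 + Vs g x1 y0 y1 - Hs g y1 x0 x1 - Vs g x0 y0 y1)%C.

Definition OnBd x0 x1 y0 y1 (w : C) : Prop :=
  (x0 <= fst w <= x1 /\ (snd w = y0 \/ snd w = y1)) \/
  (y0 <= snd w <= y1 /\ (fst w = x0 \/ fst w = x1)).
Definition Bd (g : C -> C) x0 x1 y0 y1 : Prop := forall w, OnBd x0 x1 y0 y1 w -> Ccont g w.

Lemma Bd_h g x0 x1 y0 y1 : x0 <= x1 -> Bd g x0 x1 y0 y1 ->
  cint (fun x => g (x, y0)) x0 x1 /\ cint (fun x => g (x, y1)) x0 x1.
Proof. intros Hx H. split; apply cint_h; auto; intros x Hx'; apply H; left; simpl; auto. Qed.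
Lemma Bd_v g x0 x1 y0 y1 : y0 <= y1 -> Bd g x0 x1 y0 y1 ->
  cint (fun y => g (x0, y)) y0 y1 /\ cint (fun y => g (x1, y)) y0 y1.
Proof. intros Hx H. split; apply cint_v; auto; intros x Hx'; apply H; right; simpl; auto. Qed.

Lemma vsplit g x0 x1 x2 y0 y1 : x0 <= x1 <= x2 ->
  (forall x, x0 <= x <= x2 -> Ccont g (x, y0) /\ Ccont g (x, y1)) ->
  RI g x0 x2 y0 y1 = (RI g x0 x1 y0 y1 + RI g x1 x2 y0 y1)%C.
Proof.
  intros Hx H. unfold RI.
  assert (A0 : cint (fun x => g (x, y0)) x0 x2) by (apply cint_h; [lra|]; intros; apply H; auto).
  assert (A1 : cint (fun x => g (x, y1)) x0 x2) by (apply cint_h; [lra|]; intros; apply H; auto).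
  destruct (cint_sub _ _ _ _ Hx A0) as [B0 C0].
  destruct (cint_sub _ _ _ _ Hx A1) as [B1 C1].
  unfold Hs. rewrite <- (CI_Chasles _ _ _ _ B0 C0), <- (CI_Chasles _ _ _ _ B1 C1). ring.
Qed.

Lemma hsplit g x0 x1 y0 y1 y2 : y0 <= y1 <= y2 ->
  (forall y, y0 <= y <= y2 -> Ccont g (x0, y) /\ Ccont g (x1, y)) ->
  RI g x0 x1 y0 y2 = (RI g x0 x1 y0 y1 + RI g x0 x1 y1 y2)%C.
Proof.
  intros Hy H. unfold RI.
  assert (A0 : cint (fun y => g (x0, y)) y0 y2) by (apply cint_v; [lra|]; intros; apply H; auto).
  assert (A1 : cint (fun y => g (x1, y)) y0 y2) by (apply cint_v; [lra|]; intros; apply H; auto).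
  destruct (cint_sub _ _ _ _ Hy A0) as [B0 C0].
  destruct (cint_sub _ _ _ _ Hy A1) as [B1 C1].
  unfold Vs. rewrite <- (CI_Chasles _ _ _ _ B0 C0), <- (CI_Chasles _ _ _ _ B1 C1). ring.
Qed.

Lemma RI_plus g k x0 x1 y0 y1 : x0 <= x1 -> y0 <= y1 -> Bd g x0 x1 y0 y1 -> Bd k x0 x1 y0 y1 ->
  RI (fun w => g w + k w)%C x0 x1 y0 y1 = (RI g x0 x1 y0 y1 + RI k x0 x1 y0 y1)%C.
Proof.
  intros Hx Hy Hg Hk.
  destruct (Bd_h _ _ _ _ _ Hx Hg), (Bd_v _ _ _ _ _ Hy Hg), (Bd_h _ _ _ _ _ Hx Hk), (Bd_v _ _ _ _ _ Hy Hk).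
  unfold RI, Hs, Vs.
  rewrite (CI_plus (fun x => g (x, y0)) (fun x => k (x, y0))) by auto.
  rewrite (CI_plus (fun x => g (x, y1)) (fun x => k (x, y1))) by auto.
  rewrite (CI_plus (fun y => g (x0, y)) (fun y => k (x0, y))) by auto.
  rewrite (CI_plus (fun y => g (x1, y)) (fun y => k (x1, y))) by auto.
  ring.
Qed.

Lemma RI_scal c g x0 x1 y0 y1 : x0 <= x1 -> y0 <= y1 -> Bd g x0 x1 y0 y1 ->
  RI (fun w => c * g w)%C x0 x1 y0 y1 = (c * RI g x0 x1 y0 y1)%C.
Proof.
  intros Hx Hy Hg.
  destruct (Bd_h _ _ _ _ _ Hx Hg), (Bd_v _ _ _ _ _ Hy Hg).
  unfold RI, Hs, Vs.
  rewrite (CI_scal c (fun x => g (x, y0))) by auto.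
  rewrite (CI_scal c (fun x => g (x, y1))) by auto.
  rewrite (CI_scal c (fun y => g (x0, y))) by auto.
  rewrite (CI_scal c (fun y => g (x1, y))) by auto.
  ring.
Qed.

Lemma RI_ext g k x0 x1 y0 y1 : x0 <= x1 -> y0 <= y1 ->
  (forall w, OnBd x0 x1 y0 y1 w -> g w = k w) -> RI g x0 x1 y0 y1 = RI k x0 x1 y0 y1.
Proof.
  intros Hx Hy H. unfold RI, Hs, Vs.
  rewrite (CI_ext (fun x => g (x, y0)) (fun x => k (x, y0))), (CI_ext (fun x => g (x, y1)) (fun x => k (x, y1))),
    (CI_ext (fun y => g (x0, y)) (fun y => k (x0, y))), (CI_ext (fun y => g (x1, y)) (fun y => k (x1, y))); auto;
  intros t Ht; apply H; unfold OnBd; simpl; auto.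
Qed.

Lemma RI_bound g x0 x1 y0 y1 M : x0 <= x1 -> y0 <= y1 -> Bd g x0 x1 y0 y1 ->
  (forall w, OnBd x0 x1 y0 y1 w -> Cmod (g w) <= M) ->
  Cmod (RI g x0 x1 y0 y1) <= 4 * M * ((x1 - x0) + (y1 - y0)).
Proof.
  intros Hx Hy Hg HM.
  destruct (Bd_h _ _ _ _ _ Hx Hg), (Bd_v _ _ _ _ _ Hy Hg).
  assert (E1 : Cmod (Hs g y0 x0 x1) <= 2 * (x1 - x0) * M).
  { apply CI_bound; auto. intros; apply HM; unfold OnBd; simpl; auto. }
  assert (E2 : Cmod (Hs g y1 x0 x1) <= 2 * (x1 - x0) * M).
  { apply CI_bound; auto. intros; apply HM; unfold OnBd; simpl; auto. }
  assert (E3 : Cmod (Vs g x0 y0 y1) <= 2 * (y1 - y0) * M).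
  { unfold Vs. rewrite Cmod_mult, Cmod_Ci, Rmult_1_l. apply CI_bound; auto. intros; apply HM; unfold OnBd; simpl; auto. }
  assert (E4 : Cmod (Vs g x1 y0 y1) <= 2 * (y1 - y0) * M).
  { unfold Vs. rewrite Cmod_mult, Cmod_Ci, Rmult_1_l. apply CI_bound; auto. intros; apply HM; unfold OnBd; simpl; auto. }
  unfold RI. eapply Rle_trans. apply Cmod_sub_le.
  eapply Rle_trans. apply Rplus_le_compat_r. apply Cmod_sub_le.
  eapply Rle_trans. apply Rplus_le_compat_r. apply Rplus_le_compat_r. apply Cmod_triangle.
  lra.
Qed.

Lemma RInt_affine p q a b : RInt (fun x => p + q * x) a b = p * (b - a) + q * (b * b - a * a) / 2.
Proof.
  apply is_RInt_unique.
  assert (H := is_RInt_derive (V := R_CompleteNormedModule) (fun x => p * x + q * (x * x) / 2) (fun x => p + q * x) a b).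
  replace (p * (b - a) + q * (b * b - a * a) / 2) with
    (minus ((fun x => p * x + q * (x * x) / 2) b) ((fun x => p * x + q * (x * x) / 2) a)).
  apply H.
  - intros x _. auto_derive; auto. field.
  - intros y _. apply continuity_pt_filterlim. apply continuity_pt_plus.
    apply continuity_pt_const. intros u v; auto.
    apply continuity_pt_scal. apply continuity_pt_id.
  - unfold minus, plus, opp; simpl. field.
Qed.

Lemma CI_affine p1 q1 p2 q2 a b :
  CI (fun t => (p1 + q1 * t, p2 + q2 * t)) a b =
  (p1 * (b - a) + q1 * (b * b - a * a) / 2, p2 * (b - a) + q2 * (b * b - a * a) / 2).
Proof. unfold CI; simpl. rewrite !RInt_affine. reflexivity. Qed.

Lemma RI_affine (al be : C) x0 x1 y0 y1 : x0 <= x1 -> y0 <= y1 ->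
  RI (fun w => al + be * w)%C x0 x1 y0 y1 = 0%C.
Proof.
  intros Hx Hy. destruct al as [a1 a2]. destruct be as [b1 b2].
  unfold RI, Hs, Vs.
  rewrite (CI_ext (fun x => ((a1, a2) + (b1, b2) * (x, y0))%C) (fun t => ((a1 - b2 * y0) + b1 * t, (a2 + b1 * y0) + b2 * t))),
    (CI_ext (fun x => ((a1, a2) + (b1, b2) * (x, y1))%C) (fun t => ((a1 - b2 * y1) + b1 * t, (a2 + b1 * y1) + b2 * t))),
    (CI_ext (fun y => ((a1, a2) + (b1, b2) * (x0, y))%C) (fun t => ((a1 + b1 * x0) + (- b2) * t, (a2 + b2 * x0) + b1 * t))),
    (CI_ext (fun y => ((a1, a2) + (b1, b2) * (x1, y))%C) (fun t => ((a1 + b1 * x1) + (- b2) * t, (a2 + b2 * x1) + b1 * t)));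
  auto; try (intros; apply injective_projections; simpl; ring).
  rewrite !CI_affine. apply injective_projections; simpl; field.
Qed.

Record rect := mkR { ra : R; rb : R; rc : R; rd : R }.
Definition RIr g (q : rect) := RI g (ra q) (rb q) (rc q) (rd q).

Definition sel g (q : rect) : rect :=
  let a := ra q in let b := rb q in let c := rc q in let d := rd q in
  let m := (a + b) / 2 in let n := (c + d) / 2 in
  if Rle_dec (Cmod (RI g a b c d) / 4) (Cmod (RI g a m c n)) then mkR a m c n
  else if Rle_dec (Cmod (RI g a b c d) / 4) (Cmod (RI g m b c n)) then mkR m b c n
  else if Rle_dec (Cmod (RI g a b c d) / 4) (Cmod (RI g a m n d)) then mkR a m n d
  else mkR m b n d.

Definition InR (q : rect) (w : C) := ra q <= fst w <= rb q /\ rc q <= snd w <= rd q.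

Lemma RI_quad g a b c d : a <= b -> c <= d ->
  (forall w, InR (mkR a b c d) w -> Ccont g w) ->
  RI g a b c d = (RI g a ((a+b)/2) c ((c+d)/2) + RI g ((a+b)/2) b c ((c+d)/2)
                 + RI g a ((a+b)/2) ((c+d)/2) d + RI g ((a+b)/2) b ((c+d)/2) d)%C.
Proof.
  intros Hab Hcd H. unfold InR in H; simpl in H.
  rewrite (vsplit g a ((a+b)/2) b c d) by (try lra; intros; split; apply H; simpl; lra).
  rewrite (hsplit g a ((a+b)/2) c ((c+d)/2) d) by (try lra; intros; split; apply H; simpl; lra).
  rewrite (hsplit g ((a+b)/2) b c ((c+d)/2) d) by (try lra; intros; split; apply H; simpl; lra).
  ring.
Qed.

Lemma sel_spec g q : ra q <= rb q -> rc q <= rd q -> (forall w, InR q w -> Ccont g w) ->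
  let q' := sel g q in
  ra q <= ra q' /\ rb q' <= rb q /\ rc q <= rc q' /\ rd q' <= rd q /\
  rb q' - ra q' = (rb q - ra q) / 2 /\ rd q' - rc q' = (rd q - rc q) / 2 /\
  Cmod (RIr g q) / 4 <= Cmod (RIr g q').
Proof.
  destruct q as [a b c d]; simpl. intros Hab Hcd H.
  pose proof (RI_quad g a b c d Hab Hcd H) as E.
  unfold sel, RIr; simpl.
  destruct (Rle_dec (Cmod (RI g a b c d) / 4) (Cmod (RI g a ((a + b) / 2) c ((c + d) / 2)))) as [H1|H1].
  { simpl. repeat split; try lra. }
  destruct (Rle_dec (Cmod (RI g a b c d) / 4) (Cmod (RI g ((a + b) / 2) b c ((c + d) / 2)))) as [H2|H2].
  { simpl. repeat split; try lra. }
  destruct (Rle_dec (Cmod (RI g a b c d) / 4) (Cmod (RI g a ((a + b) / 2) ((c + d) / 2) d))) as [H3|H3].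
  { simpl. repeat split; try lra. }
  simpl. repeat split; try lra.
  set (X1 := RI g a ((a + b) / 2) c ((c + d) / 2)) in *.
  set (X2 := RI g ((a + b) / 2) b c ((c + d) / 2)) in *.
  set (X3 := RI g a ((a + b) / 2) ((c + d) / 2) d) in *.
  set (X4 := RI g ((a + b) / 2) b ((c + d) / 2) d) in *.
  rewrite E in *.
  pose proof (Cmod_triangle (X1 + X2 + X3) X4);
  pose proof (Cmod_triangle (X1 + X2) X3);
  pose proof (Cmod_triangle X1 X2).
  lra.
Qed.

Definition qseq g q (n : nat) : rect := Nat.iter n (sel g) q.

Lemma pow2_gt n : INR n < 2 ^ n.
Proof. induction n. simpl; lra. rewrite S_INR. rewrite <- tech_pow_Rmult.
  assert (1 <= 2 ^ n). { clear IHn. induction n. simpl; lra. rewrite <- tech_pow_Rmult. lra. }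
  lra. Qed.

Lemma small_pow2 K d : 0 < d -> exists n, K / 2 ^ n < d.
Proof.
  intros Hd. destruct (archimed (K / d)) as [H1 _].
  destruct (INR_unbounded (Rabs (K / d))) as [n Hn].
  exists n. pose proof (pow2_gt n) as P1. pose proof (pow_lt 2 n ltac:(lra)) as P2.
  apply Rcomplements.Rlt_div_l; auto.
  pose proof (Rle_abs (K / d)) as P3.
  assert (P4 : K / d < 2 ^ n) by lra.
  apply Rcomplements.Rlt_div_l in P4; auto. lra.
Qed.

Section Seq.
Variable g : C -> C.
Variable Q : rect.
Hypothesis Hab : ra Q <= rb Q.
Hypothesis Hcd : rc Q <= rd Q.
Hypothesis Hc : forall w, InR Q w -> Ccont g w.

Lemma qseq_inv n :
  ra Q <= ra (qseq g Q n) /\ ra (qseq g Q n) <= rb (qseq g Q n) /\ rb (qseq g Q n) <= rb Q /\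
  rc Q <= rc (qseq g Q n) /\ rc (qseq g Q n) <= rd (qseq g Q n) /\ rd (qseq g Q n) <= rd Q /\
  rb (qseq g Q n) - ra (qseq g Q n) = (rb Q - ra Q) / 2 ^ n /\
  rd (qseq g Q n) - rc (qseq g Q n) = (rd Q - rc Q) / 2 ^ n /\
  Cmod (RIr g Q) <= 4 ^ n * Cmod (RIr g (qseq g Q n)).
Proof.
  induction n.
  - simpl. repeat split; lra.
  - destruct IHn as (I1 & I2 & I3 & I4 & I5 & I6 & I7 & I8 & I9).
    assert (Hcn : forall w, InR (qseq g Q n) w -> Ccont g w).
    { intros w [Hw1 Hw2]. apply Hc. split; lra. }
    pose proof (sel_spec g (qseq g Q n) I2 I5 Hcn) as (S1 & S2 & S3 & S4 & S5 & S6 & S7).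
    change (qseq g Q (S n)) with (sel g (qseq g Q n)).
    pose proof (pow_lt 2 n ltac:(lra)).
    rewrite <- !tech_pow_Rmult.
    repeat split; try lra.
    + rewrite S5, I7. field. lra.
    + rewrite S6, I8. field. lra.
    + pose proof (pow_lt 4 n ltac:(lra)). nra.
Qed.

Lemma qseq_step n : ra (qseq g Q n) <= ra (qseq g Q (S n)) /\ rb (qseq g Q (S n)) <= rb (qseq g Q n) /\
  rc (qseq g Q n) <= rc (qseq g Q (S n)) /\ rd (qseq g Q (S n)) <= rd (qseq g Q n).
Proof.
  destruct (qseq_inv n) as (I1 & I2 & I3 & I4 & I5 & I6 & _).
  assert (Hcn : forall w, InR (qseq g Q n) w -> Ccont g w).
  { intros w [Hw1 Hw2]. apply Hc. split; lra. }
  pose proof (sel_spec g (qseq g Q n) I2 I5 Hcn) as (S1 & S2 & S3 & S4 & _).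
  change (qseq g Q (S n)) with (sel g (qseq g Q n)). auto.
Qed.

Lemma qseq_mono n m : (n <= m)%nat -> ra (qseq g Q n) <= ra (qseq g Q m) /\ rb (qseq g Q m) <= rb (qseq g Q n) /\
  rc (qseq g Q n) <= rc (qseq g Q m) /\ rd (qseq g Q m) <= rd (qseq g Q n).
Proof.
  induction 1. repeat split; lra.
  pose proof (qseq_step m). lra.
Qed.

Lemma qseq_cross n m : ra (qseq g Q m) <= rb (qseq g Q n) /\ rc (qseq g Q m) <= rd (qseq g Q n).
Proof.
  destruct (qseq_mono n (max n m) ltac:(lia)) as (A1 & A2 & A3 & A4).
  destruct (qseq_mono m (max n m) ltac:(lia)) as (B1 & B2 & B3 & B4).
  destruct (qseq_inv (max n m)) as (_ & C2 & _ & _ & C5 & _). lra.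
Qed.

Lemma qseq_point : exists z, forall n, InR (qseq g Q n) z.
Proof.
  destruct (completeness (fun x => exists n, x = ra (qseq g Q n))) as [X [HX1 HX2]].
  { exists (rb Q). intros x [n ->]. destruct (qseq_inv n) as (_ & _ & I3 & _). pose proof (qseq_cross n n). lra. }
  { exists (ra (qseq g Q 0)). exists 0%nat. auto. }
  destruct (completeness (fun x => exists n, x = rc (qseq g Q n))) as [Y [HY1 HY2]].
  { exists (rd Q). intros x [n ->]. destruct (qseq_inv n) as (_ & _ & _ & _ & I5 & I6 & _). lra. }
  { exists (rc (qseq g Q 0)). exists 0%nat. auto. }
  exists (X, Y). intros n. split; simpl; split.
  - apply HX1. exists n; auto.
  - apply HX2. intros x [m ->]. apply qseq_cross.
  - apply HY1. exists n; auto.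
  - apply HY2. intros x [m ->]. apply qseq_cross.
Qed.
End Seq.

Lemma le_eps x K : 0 <= x -> 0 <= K -> (forall eps, 0 < eps -> x <= eps * K) -> x = 0.
Proof.
  intros Hx HK H. destruct (Req_dec x 0); auto.
  assert (0 < x) by lra. specialize (H (x / (2 * (K + 1)))).
  assert (0 < x / (2 * (K + 1))) by (apply Rdiv_lt_0_compat; lra).
  specialize (H H2).
  assert (x / (2 * (K + 1)) * K < x).
  { replace (x / (2 * (K + 1)) * K) with (x * (K / (2 * (K + 1)))) by (field; lra).
    rewrite <- (Rmult_1_r x) at 2. apply Rmult_lt_compat_l; auto.
    apply Rcomplements.Rlt_div_l; lra. }
  lra.
Qed.

Lemma OnBd_InR q w : ra q <= rb q -> rc q <= rd q -> OnBd (ra q) (rb q) (rc q) (rd q) w -> InR q w.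
Proof. intros H1 H2 [[A [B|B]]|[A [B|B]]]; unfold InR; rewrite B; lra. Qed.

Lemma Cmod_diff_le (w z : C) : Cmod (w - z)%C <= Rabs (fst w - fst z) + Rabs (snd w - snd z).
Proof. apply Cmod_le_abs. Qed.

Lemma goursat g a b c d : a <= b -> c <= d ->
  (forall w, InR (mkR a b c d) w -> Dif g w) -> RI g a b c d = 0%C.
Proof.
  intros Hab Hcd HD. set (Q := mkR a b c d).
  assert (Hc : forall w, InR Q w -> Ccont g w) by (intros; apply Dif_cont; auto).
  destruct (qseq_point g Q Hab Hcd Hc) as [z Hz].
  assert (HzQ : InR Q z) by apply (Hz 0%nat).
  destruct (HD z HzQ) as [l Hl].
  set (s0 := (b - a) + (d - c)).
  apply Cmod_eq_0. apply (le_eps _ (4 * s0 ^ 2)). apply Cmod_ge_0. nra.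
  intros eps Heps.
  destruct (Hl eps Heps) as [delta [Hdelta Hh]].
  destruct (small_pow2 s0 delta Hdelta) as [n Hn].
  destruct (qseq_inv g Q Hab Hcd Hc n) as (I1 & I2 & I3 & I4 & I5 & I6 & I7 & I8 & I9).
  set (qn := qseq g Q n) in *.
  pose proof (pow_lt 2 n ltac:(lra)) as P2.
  set (sn := (rb qn - ra qn) + (rd qn - rc qn)).
  assert (Hsn : sn = s0 / 2 ^ n) by (unfold sn, s0; rewrite I7, I8; simpl; field; lra).
  assert (HinQ : forall w, InR qn w -> InR Q w).
  { intros w [[A1 A2] [A3 A4]]. unfold InR, Q in *; simpl in *. repeat split; lra. }
  assert (Hdist : forall w, InR qn w -> Cmod (w - z)%C <= sn).
  { intros w [[A1 A2] [A3 A4]]. destruct (Hz n) as [[B1 B2] [B3 B4]]. fold qn in B1, B2, B3, B4.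
    eapply Rle_trans. apply Cmod_diff_le. unfold sn.
    pose proof (Rabs_le_between' (fst w - fst z) 0 (rb qn - ra qn)).
    assert (Rabs (fst w - fst z) <= rb qn - ra qn) by (apply Rabs_le; lra).
    assert (Rabs (snd w - snd z) <= rd qn - rc qn) by (apply Rabs_le; lra). lra. }
  set (al := (g z - l * z)%C).
  set (r := fun w => (g w - (al + l * w))%C).
  assert (Hr : forall w, InR qn w -> Cmod (r w) <= eps * sn).
  { intros w Hw. specialize (Hdist w Hw).
    assert (Cmod (w - z)%C < delta) by (rewrite Hsn in Hdist; lra).
    specialize (Hh (w - z)%C H). replace (z + (w - z))%C with w in Hh by ring.
    unfold r, al. replace (g w - (g z - l * z + l * w))%C with (g w - g z - l * (w - z))%C by ring.
    eapply Rle_trans. apply Hh. apply Rmult_le_compat_l; lra. }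
  assert (Bdaff : Bd (fun w => al + l * w)%C (ra qn) (rb qn) (rc qn) (rd qn)).
  { intros w _. apply Dif_cont. apply Dif_add. apply Dif_const. apply Dif_scal. apply Dif_id. }
  assert (Bdr : Bd r (ra qn) (rb qn) (rc qn) (rd qn)).
  { intros w Hw. apply Dif_cont. unfold r. apply Dif_sub. apply HD. apply HinQ. apply OnBd_InR; auto.
    apply Dif_add. apply Dif_const. apply Dif_scal. apply Dif_id. }
  assert (E : RIr g qn = RI r (ra qn) (rb qn) (rc qn) (rd qn)).
  { unfold RIr. rewrite (RI_ext g (fun w => (al + l * w) + r w)%C) by (auto; intros; unfold r; ring).
    rewrite RI_plus by auto. rewrite RI_affine by auto. ring. }
  assert (Bn : Cmod (RIr g qn) <= 4 * (eps * sn) * sn).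
  { rewrite E. apply RI_bound; auto. intros w Hw. apply Hr. apply OnBd_InR; auto. }
  change (RI g a b c d) with (RIr g Q).
  eapply Rle_trans. apply I9.
  assert (E4 : 4 ^ n = 2 ^ n * 2 ^ n) by (rewrite <- Rpow_mult_distr; f_equal; lra).
  apply Rle_trans with (4 ^ n * (4 * (eps * sn) * sn)).
  apply Rmult_le_compat_l; auto. apply pow_le; lra.
  right. rewrite E4, Hsn. field. lra.
Qed.

Lemma RInt_atan k u0 e : 0 < e ->
  RInt (fun x => k / ((x - u0) ^ 2 + e ^ 2)) (u0 - e) (u0 + e) = k * PI / (2 * e).
Proof.
  intros He. apply is_RInt_unique.
  set (F := fun x => k / e * atan ((x - u0) / e)).
  replace (k * PI / (2 * e)) with (minus (F (u0 + e)) (F (u0 - e))).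
  apply (is_RInt_derive (V := R_CompleteNormedModule)).
  - intros x _. unfold F. auto_derive; auto.
    assert (0 < (x - u0) ^ 2 + e ^ 2) by (pose proof (pow2_ge_0 (x - u0)); pose proof (pow_lt e 2 He); lra).
    field; repeat split; try lra; intro Hc; nra.
  - intros x _. apply (ex_derive_continuous (K := R_AbsRing) (V := R_NormedModule)). auto_derive.
    pose proof (pow2_ge_0 (x - u0)). pose proof (pow_lt e 2 He). nra.
  - unfold F, minus, plus, opp; simpl.
    replace ((u0 + e - u0) / e) with 1 by (field; lra).
    replace ((u0 - e - u0) / e) with (Ropp 1) by (field; lra).
    rewrite atan_opp, atan_1. field. lra.
Qed.

Lemma RInt_log k u0 e : 0 < e ->
  RInt (fun x => k * (x - u0) / ((x - u0) ^ 2 + e ^ 2)) (u0 - e) (u0 + e) = 0.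
Proof.
  intros He. apply is_RInt_unique.
  set (F := fun x => k * ln ((x - u0) ^ 2 + e ^ 2) / 2).
  replace 0 with (minus (F (u0 + e)) (F (u0 - e))).
  apply (is_RInt_derive (V := R_CompleteNormedModule)).
  - intros x _. unfold F. auto_derive.
    pose proof (pow2_ge_0 (x - u0)). pose proof (pow_lt e 2 He). nra.
    field. pose proof (pow2_ge_0 (x - u0)). pose proof (pow_lt e 2 He). nra.
  - intros x _. apply (ex_derive_continuous (K := R_AbsRing) (V := R_NormedModule)). auto_derive.
    pose proof (pow2_ge_0 (x - u0)). pose proof (pow_lt e 2 He). nra.
  - unfold F, minus, plus, opp; simpl.
    replace (u0 + e - u0) with e by ring. replace (u0 - e - u0) with (- e) by ring.
    replace (- e * (- e * 1) + e * (e * 1)) with (e * (e * 1) + e * (e * 1)) by ring. ring.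
Qed.

Definition J0 : C := (0, 2 * PI).

Ltac nz_tac := let Hc := fresh in intro Hc;
  first [ apply Rplus_sqr_eq_0 in Hc; lra | nra |
    (match type of Hc with ?a * (?a * 1) + ?b * (?b * 1) = 0 =>
       rewrite !Rmult_1_r in Hc; apply Rplus_sqr_eq_0 in Hc; lra end) ].
Ltac cinv_tac := intros; apply injective_projections; simpl; field;
  repeat split; nz_tac.

Lemma RI_inv u e : 0 < e ->
  RI (fun w => / (w - u))%C (fst u - e) (fst u + e) (snd u - e) (snd u + e) = J0.
Proof.
  intros He. destruct u as [ux uy]. simpl. unfold RI, Hs, Vs.
  rewrite (CI_ext (fun x => / ((x, (uy - e)%R) - (ux, uy)))%C
     (fun t => (1 * (t - ux) / ((t - ux) ^ 2 + e ^ 2), e / ((t - ux) ^ 2 + e ^ 2)))) by (try lra; cinv_tac).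
  rewrite (CI_ext (fun x => / ((x, (uy + e)%R) - (ux, uy)))%C
     (fun t => (1 * (t - ux) / ((t - ux) ^ 2 + e ^ 2), (- e) / ((t - ux) ^ 2 + e ^ 2)))) by (try lra; cinv_tac).
  rewrite (CI_ext (fun y => / (((ux - e)%R, y) - (ux, uy)))%C
     (fun t => ((- e) / ((t - uy) ^ 2 + e ^ 2), (-1) * (t - uy) / ((t - uy) ^ 2 + e ^ 2)))) by (try lra; cinv_tac).
  rewrite (CI_ext (fun y => / (((ux + e)%R, y) - (ux, uy)))%C
     (fun t => (e / ((t - uy) ^ 2 + e ^ 2), (-1) * (t - uy) / ((t - uy) ^ 2 + e ^ 2)))) by (try lra; cinv_tac).
  unfold CI; cbn [fst snd]. rewrite !RInt_log, !RInt_atan by lra.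
  unfold J0. apply injective_projections; simpl; field; lra.
Qed.

Lemma le_eps0 x K e0 : 0 <= x -> 0 <= K -> 0 < e0 ->
  (forall eps, 0 < eps < e0 -> x <= eps * K) -> x = 0.
Proof.
  intros Hx HK He0 H. apply (le_eps x K); auto. intros eps Heps.
  destruct (Rlt_dec eps e0).
  - apply H; lra.
  - apply Rle_trans with (e0 / 2 * K). apply H; lra. apply Rmult_le_compat_r; lra.
Qed.

Lemma neq_fst (w u : C) : fst w <> fst u -> w <> u.
Proof. intros H E. apply H. rewrite E. auto. Qed.
Lemma neq_snd (w u : C) : snd w <> snd u -> w <> u.
Proof. intros H E. apply H. rewrite E. auto. Qed.

Lemma Dif_cauchy_integrand f u w : (forall z, Dif f z) -> w <> u -> Dif (fun w => f w * / (w - u))%C w.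
Proof. intros Hf Hw. apply Dif_mul; auto. apply Dif_inv_lin; auto. Qed.

Lemma deform g a b c d u e :
  (forall w, w <> u -> Dif g w) ->
  a < fst u - e -> fst u + e < b -> c < snd u - e -> snd u + e < d -> 0 < e ->
  RI g a b c d = RI g (fst u - e) (fst u + e) (snd u - e) (snd u + e).
Proof.
  intros HD H1 H2 H3 H4 He. destruct u as [ux uy]; simpl in *.
  assert (HC : forall w, w <> (ux, uy) -> Ccont g w) by (intros; apply Dif_cont; auto).
  rewrite (vsplit g a (ux - e) b c d) by (try lra; intros; split; apply HC; apply neq_snd; simpl; lra).
  rewrite (vsplit g (ux - e) (ux + e) b c d) by (try lra; intros; split; apply HC; apply neq_snd; simpl; lra).
  rewrite (hsplit g (ux - e) (ux + e) c (uy - e) d) by (try lra; intros; split; apply HC; apply neq_fst; simpl; lra).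
  rewrite (hsplit g (ux - e) (ux + e) (uy - e) (uy + e) d) by (try lra; intros; split; apply HC; apply neq_fst; simpl; lra).
  rewrite (goursat g a (ux - e) c d) by (try lra; intros w [Hw1 Hw2]; simpl in *; apply HD; apply neq_fst; simpl; lra).
  rewrite (goursat g (ux + e) b c d) by (try lra; intros w [Hw1 Hw2]; simpl in *; apply HD; apply neq_fst; simpl; lra).
  rewrite (goursat g (ux - e) (ux + e) c (uy - e)) by (try lra; intros w [Hw1 Hw2]; simpl in *; apply HD; apply neq_snd; simpl; lra).
  rewrite (goursat g (ux - e) (ux + e) (uy + e) d) by (try lra; intros w [Hw1 Hw2]; simpl in *; apply HD; apply neq_snd; simpl; lra).
  ring.
Qed.

Lemma onbd_sq ux uy e w : 0 < e -> OnBd (ux - e) (ux + e) (uy - e) (uy + e) w ->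
  w <> (ux, uy) /\ Cmod (w - (ux, uy))%C <= 2 * e.
Proof.
  intros He Hw. split.
  - destruct Hw as [[A [B|B]]|[A [B|B]]]; [apply neq_snd|apply neq_snd|apply neq_fst|apply neq_fst]; simpl; lra.
  - eapply Rle_trans. apply Cmod_le_abs. simpl.
    assert (Rabs (fst w + - ux) <= e /\ Rabs (snd w + - uy) <= e) as [X Y].
    { destruct Hw as [[A [B|B]]|[A [B|B]]]; rewrite B; split; apply Rabs_le; lra. }
    lra.
Qed.

Lemma cauchy_formula f a b c d u : (forall z, Dif f z) -> a < fst u < b -> c < snd u < d ->
  RI (fun w => f w * / (w - u))%C a b c d = (f u * J0)%C.
Proof.
  intros Hf Hx Hy.
  destruct (Hf u) as [l Hl]. destruct (Dat_bound _ _ _ Hl) as [dl [Hdl Hb]].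
  pose proof (Cmod_ge_0 l) as Hl0.
  set (e0 := Rmin (Rmin (fst u - a) (b - fst u)) (Rmin (Rmin (snd u - c) (d - snd u)) (dl / 4))).
  assert (He0 : 0 < e0) by (unfold e0; repeat apply Rmin_pos; lra).
  assert (Hm : e0 <= fst u - a /\ e0 <= b - fst u /\ e0 <= snd u - c /\ e0 <= d - snd u /\ e0 <= dl / 4).
  { unfold e0.
    pose proof (Rmin_l (Rmin (fst u - a) (b - fst u)) (Rmin (Rmin (snd u - c) (d - snd u)) (dl / 4))).
    pose proof (Rmin_r (Rmin (fst u - a) (b - fst u)) (Rmin (Rmin (snd u - c) (d - snd u)) (dl / 4))).
    pose proof (Rmin_l (fst u - a) (b - fst u)). pose proof (Rmin_r (fst u - a) (b - fst u)).
    pose proof (Rmin_l (Rmin (snd u - c) (d - snd u)) (dl / 4)). pose proof (Rmin_r (Rmin (snd u - c) (d - snd u)) (dl / 4)).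
    pose proof (Rmin_l (snd u - c) (d - snd u)). pose proof (Rmin_r (snd u - c) (d - snd u)).
    repeat split; lra. }
  set (g := fun w => (f w * / (w - u))%C).
  set (h := fun w => ((f w - f u) * / (w - u))%C).
  assert (E : (RI g a b c d - f u * J0)%C = 0%C).
  { apply Cmod_eq_0. apply (le_eps0 _ (16 * (Cmod l + 1)) e0); auto using Cmod_ge_0. lra.
    intros eps Heps. destruct u as [ux uy]. simpl in *.
    rewrite (deform g a b c d (ux, uy) eps) by (simpl; try lra; intros; apply Dif_cauchy_integrand; auto).
    simpl.
    assert (Hbd : forall w, OnBd (ux - eps) (ux + eps) (uy - eps) (uy + eps) w -> w <> (ux, uy))
      by (intros; apply (onbd_sq ux uy eps); auto; lra).
    rewrite (RI_ext g (fun w => f (ux, uy) * / (w - (ux, uy)) + h w)%C) by (try lra; intros; unfold g, h; ring).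
    rewrite RI_plus, RI_scal; try lra.
    all: try (intros w Hw; apply Dif_cont; first [ apply Dif_scal; apply Dif_inv_lin; auto | apply Dif_inv_lin; auto |
      unfold h; apply Dif_mul; [apply Dif_sub; auto; apply Dif_const | apply Dif_inv_lin; auto] ]).
    pose proof (RI_inv (ux, uy) eps ltac:(lra)) as HJ. simpl in HJ. rewrite HJ.
    replace (f (ux, uy) * J0 + RI h (ux - eps) (ux + eps) (uy - eps) (uy + eps) - f (ux, uy) * J0)%C
      with (RI h (ux - eps) (ux + eps) (uy - eps) (uy + eps)) by ring.
    replace (eps * (16 * (Cmod l + 1))) with (4 * (Cmod l + 1) * ((ux + eps - (ux - eps)) + (uy + eps - (uy - eps)))) by ring.
    apply RI_bound; try lra.
    - intros w Hw. apply Dif_cont. unfold h. apply Dif_mul. apply Dif_sub; auto. apply Dif_const.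
      apply Dif_inv_lin; auto.
    - intros w Hw. destruct (onbd_sq ux uy eps w ltac:(lra) Hw) as [Hne Hd].
      assert (Hnz : (w - (ux, uy))%C <> 0%C).
      { intro Z. apply Hne. replace w with (w - (ux, uy) + (ux, uy))%C by ring. rewrite Z. ring. }
      unfold h. rewrite Cmod_mult, Cmod_inv by auto.
      assert (Hpos : 0 < Cmod (w - (ux, uy))%C) by (apply Cmod_gt_0; auto).
      specialize (Hb (w - (ux, uy))%C ltac:(lra)). replace ((ux, uy) + (w - (ux, uy)))%C with w in Hb by ring.
      apply (Rmult_le_compat_r (/ Cmod (w - (ux, uy))%C)) in Hb.
      2: { left. apply Rinv_0_lt_compat; auto. }
      rewrite Hb. right. field. lra. }
  replace (RI g a b c d) with ((RI g a b c d - f u * J0) + f u * J0)%C by ring.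
  rewrite E. ring.
Qed.

Lemma cplus0_eq (a b : C) : (a + 0 = b + 0)%C -> a = b.
Proof. rewrite !Cplus_0_r. auto. Qed.

Ltac cring := match goal with |- @eq _ ?a ?b => change (@eq C a b) end; apply cplus0_eq;
  try change Defs.Cmul with Cmult; try change Defs.Cadd with Cplus;
  try change Defs.Csub with Cminus; try change Defs.Copp with Complex.Copp;
  try change C0 with (RtoC 0); ring.

Lemma peval_nil z : peval nil z = RtoC 0.
Proof. reflexivity. Qed.
Lemma peval_cons a q z : peval (a :: q) z = (a + z * peval q z)%C.
Proof. reflexivity. Qed.
Lemma C0_eq : C0 = RtoC 0.
Proof. reflexivity. Qed.

Fixpoint padd (p q : Cpoly) : Cpoly :=
  match p, q with
  | nil, _ => q
  | _, nil => p
  | a :: p', b :: q' => (a + b)%C :: padd p' q'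
  end.

Lemma peval_padd p q z : peval (padd p q) z = (peval p z + peval q z)%C.
Proof.
  revert q. induction p as [|a p IH]; intros [|b q]; simpl padd;
  rewrite ?peval_nil, ?peval_cons; try cring.
  rewrite IH. cring.
Qed.

Definition pscale (a : C) (p : Cpoly) : Cpoly := map (fun x => a * x)%C p.
Lemma peval_pscale a p z : peval (pscale a p) z = (a * peval p z)%C.
Proof. induction p as [|b p IH]; simpl pscale; rewrite ?peval_nil, ?peval_cons. cring. rewrite IH. cring. Qed.

Fixpoint pmul (p q : Cpoly) : Cpoly :=
  match p with
  | nil => nil
  | a :: p' => padd (pscale a q) (C0 :: pmul p' q)
  end.
Lemma peval_pmul p q z : peval (pmul p q) z = (peval p z * peval q z)%C.
Proof.
  induction p as [|a p IH]; simpl pmul; rewrite ?peval_nil, ?peval_cons. cring.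
  rewrite peval_padd, peval_pscale, peval_cons, IH, C0_eq. cring.
Qed.

Definition PolyFun (g : C -> C) : Prop := exists p : Cpoly, forall z, g z = peval p z.

Lemma PF_const c : PolyFun (fun _ => c).
Proof. exists (c :: nil). intros. rewrite peval_cons, peval_nil. cring. Qed.
Lemma PF_id : PolyFun (fun z => z).
Proof. exists (C0 :: Defs.C1 :: nil). intros. rewrite !peval_cons, peval_nil, C0_eq. unfold Defs.C1. change (1, 0) with (RtoC 1). cring. Qed.
Lemma PF_add g k : PolyFun g -> PolyFun k -> PolyFun (fun z => g z + k z)%C.
Proof. intros [p Hp] [q Hq]. exists (padd p q). intros. rewrite peval_padd, Hp, Hq. auto. Qed.
Lemma PF_mul g k : PolyFun g -> PolyFun k -> PolyFun (fun z => g z * k z)%C.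
Proof. intros [p Hp] [q Hq]. exists (pmul p q). intros. rewrite peval_pmul, Hp, Hq. auto. Qed.
Lemma PF_ext g k : PolyFun g -> (forall z, g z = k z) -> PolyFun k.
Proof. intros [p Hp] E. exists p. intros. rewrite <- E. auto. Qed.

Lemma Csum_S n F : Csum (S n) F = (Csum n F + F n)%C.
Proof. reflexivity. Qed.
Lemma Csum_0 F : Csum 0 F = RtoC 0.
Proof. reflexivity. Qed.

Lemma PF_Csum n (F : nat -> C -> C) : (forall k, PolyFun (F k)) -> PolyFun (fun z => Csum n (fun k => F k z)).
Proof.
  intros H. induction n. eapply PF_ext. apply (PF_const (RtoC 0)). intros; reflexivity.
  eapply PF_ext. apply PF_add. apply IHn. apply H. intros. rewrite Csum_S. auto.
Qed.

Definition xj (j : nat) : C := (INR j, 0).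
Fixpoint rho (k : nat) (w : C) : C := match k with O => RtoC 1 | S k => (rho k w * / (w - xj k))%C end.
Fixpoint pik (k : nat) (u : C) : C := match k with O => RtoC 1 | S k => (pik k u * (u - xj k))%C end.

Definition Ins R (v : C) := Rabs (fst v) < R /\ Rabs (snd v) < R.

Lemma bd_neq R w v : OnBd (-R) R (-R) R w -> Ins R v -> w <> v.
Proof.
  intros Hw [H1 H2] E. subst v.
  assert (R > 0) by (pose proof (Rabs_pos (fst w)); lra).
  destruct Hw as [[A [B|B]]|[A [B|B]]]; rewrite B in *.
  - rewrite Rabs_Ropp, Rabs_pos_eq in H2; lra.
  - rewrite Rabs_pos_eq in H2; lra.
  - rewrite Rabs_Ropp, Rabs_pos_eq in H1; lra.
  - rewrite Rabs_pos_eq in H1; lra.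
Qed.

Lemma bd_mod R w : 0 <= R -> OnBd (-R) R (-R) R w -> R <= Cmod w /\ Cmod w <= 2 * R.
Proof.
  intros HR Hw. pose proof (Rmax_Cmod w). pose proof (Cmod_le_abs w).
  pose proof (Rmax_l (Rabs (fst w)) (Rabs (snd w))). pose proof (Rmax_r (Rabs (fst w)) (Rabs (snd w))).
  destruct Hw as [[A [B|B]]|[A [B|B]]]; rewrite B in *; rewrite ?Rabs_Ropp, (Rabs_pos_eq R) in * by lra;
  [assert (Rabs (fst w) <= R) by (apply Rabs_le; lra)|assert (Rabs (fst w) <= R) by (apply Rabs_le; lra)
  |assert (Rabs (snd w) <= R) by (apply Rabs_le; lra)|assert (Rabs (snd w) <= R) by (apply Rabs_le; lra)];
  split; lra.
Qed.

Lemma xj_ins R j : INR j < R -> Ins R (xj j).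
Proof.
  intros H. pose proof (pos_INR j). unfold Ins, xj; simpl. rewrite Rabs_R0, Rabs_pos_eq; lra.
Qed.

Lemma Cmod_ins R v : Cmod v < R -> Ins R v.
Proof. intros H. split. pose proof (fst_le_Cmod v); lra. pose proof (snd_le_Cmod v); lra. Qed.

Lemma Dif_rho k w : (forall j, (j < k)%nat -> w <> xj j) -> Dif (rho k) w.
Proof.
  induction k; intros H; simpl.
  - apply Dif_const.
  - apply Dif_mul. apply IHk. intros; apply H; lia. apply Dif_inv_lin. apply H. lia.
Qed.

Lemma Cneq0 (a b : C) : a <> b -> (a - b)%C <> RtoC 0.
Proof. intros H E. apply H. replace a with ((a - b) + b)%C by cring. rewrite E. cring. Qed.

Lemma Csum_scal (c : C) n (F : nat -> C) : Csum n (fun k => c * F k)%C = (c * Csum n F)%C.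
Proof. induction n. rewrite !Csum_0. cring.
  rewrite !Csum_S, IHn. cring. Qed.

Lemma Csum_ext n (F G : nat -> C) : (forall k, (k < n)%nat -> F k = G k) -> Csum n F = Csum n G.
Proof. induction n; intros H. reflexivity. rewrite !Csum_S, IHn, H; auto. Qed.

Lemma Csum_minus n (F G : nat -> C) : Csum n (fun k => F k - G k)%C = (Csum n F - Csum n G)%C.
Proof. induction n. rewrite !Csum_0. cring.
  rewrite !Csum_S, IHn. cring. Qed.

Lemma Csum_zero n (F : nat -> C) : (forall k, (k < n)%nat -> F k = RtoC 0) -> Csum n F = RtoC 0.
Proof. induction n; intros H. reflexivity. rewrite Csum_S, IHn, H; auto. cring. Qed.

Lemma Csum_tail n N (F : nat -> C) : (n <= N)%nat -> (forall k, (n <= k < N)%nat -> F k = RtoC 0) -> Csum N F = Csum n F.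
Proof. induction 1 as [|N Hle IH]; intros HF. reflexivity. rewrite Csum_S, IH, HF. cring. lia. intros; apply HF; lia. Qed.

Lemma pik_node n m : (m < n)%nat -> pik n (xj m) = RtoC 0.
Proof.
  induction 1; simpl. replace (xj m - xj m)%C with (RtoC 0) by cring. cring.
  rewrite IHle. cring.
Qed.

Lemma pik_node_nz m : pik m (xj m) <> RtoC 0.
Proof.
  assert (forall k, (k <= m)%nat -> pik k (xj m) <> RtoC 0).
  { induction k; intros Hk; simpl. intro E; injection E; lra.
    apply Cmult_neq_0. apply IHk; lia. apply Cneq0. unfold xj. intro E. injection E as E.
    apply INR_eq in E. lia. }
  apply H. lia.
Qed.

Lemma J0_nz : J0 <> RtoC 0.
Proof. unfold J0. intro E. injection E as E. pose proof PI_RGT_0. lra. Qed.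

Section Liouville.
Variable f : C -> C.
Hypothesis Hf : forall z, Dif f z.

Definition KR R k u := RI (fun w => f w * rho k w * / (w - u))%C (-R) R (-R) R.

Lemma integrand_cont R k u w : 0 < R -> Ins R u -> (forall j, (j < k)%nat -> INR j < R) ->
  OnBd (-R) R (-R) R w -> Ccont (fun w => f w * rho k w * / (w - u))%C w.
Proof.
  intros HR Hu Hj Hw. apply Dif_cont. apply Dif_mul. apply Dif_mul. auto.
  apply Dif_rho. intros j Hjk. apply (bd_neq R); auto. apply xj_ins; auto.
  apply Dif_inv_lin. apply (bd_neq R); auto.
Qed.

Lemma K0 R u : 0 < R -> Ins R u -> KR R 0 u = (f u * J0)%C.
Proof.
  intros HR [Hu1 Hu2]. unfold KR.
  rewrite (RI_ext _ (fun w => f w * / (w - u))%C) by (try lra; intros; simpl; cring).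
  destruct (Rabs_def2 _ _ Hu1). destruct (Rabs_def2 _ _ Hu2). apply cauchy_formula; auto; lra.
Qed.

Lemma Krec R k u : 0 < R -> Ins R u -> (forall j, (j <= k)%nat -> INR j < R) ->
  (KR R k u - KR R k (xj k))%C = ((u - xj k) * KR R (S k) u)%C.
Proof.
  intros HR Hu Hj.
  assert (Hjk : forall j, (j < k)%nat -> INR j < R) by (intros; apply Hj; lia).
  assert (Hxk : Ins R (xj k)) by (apply xj_ins; auto).
  unfold KR.
  replace (RI (fun w => f w * rho k w * / (w - u))%C (-R) R (-R) R - RI (fun w => f w * rho k w * / (w - xj k))%C (-R) R (-R) R)%C
    with (RI (fun w => f w * rho k w * / (w - u))%C (-R) R (-R) R + (-1) * RI (fun w => f w * rho k w * / (w - xj k))%C (-R) R (-R) R)%C by cring.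
  rewrite <- RI_scal, <- RI_plus; try lra.
  2, 3, 4: intros w Hw; try (apply Dif_cont; apply Dif_scal; apply Dif_mul; [apply Dif_mul; auto; apply Dif_rho; intros j Hj'; apply (bd_neq R); auto; apply xj_ins; auto|apply Dif_inv_lin; apply (bd_neq R); auto]);
    apply (integrand_cont R k); auto.
  rewrite <- RI_scal; try lra.
  2: { intros w Hw. apply (integrand_cont R (S k)); auto. intros; apply Hj; lia. }
  apply RI_ext; try lra. intros w Hw. simpl.
  pose proof (Cneq0 _ _ (bd_neq R w u Hw Hu)).
  pose proof (Cneq0 _ _ (bd_neq R w (xj k) Hw Hxk)).
  field. auto.
Qed.

Lemma Ktele R u m : 0 < R -> Ins R u -> (forall j, (j < m)%nat -> INR j < R) ->
  KR R 0 u = (Csum m (fun k => KR R k (xj k) * pik k u) + pik m u * KR R m u)%C.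
Proof.
  intros HR Hu. induction m; intros Hj.
  - rewrite Csum_0. simpl. cring.
  - rewrite IHm by (intros; apply Hj; lia). rewrite Csum_S. simpl.
    pose proof (Krec R m u HR Hu ltac:(intros; apply Hj; lia)).
    replace (KR R m u) with (KR R m (xj m) + (u - xj m) * KR R (S m) u)%C
      by (rewrite <- H; cring).
    cring.
Qed.
End Liouville.

Lemma Cmod_xj j : Cmod (xj j) = INR j.
Proof. unfold xj. change (INR j, 0) with (RtoC (INR j)). rewrite Cmod_R. apply Rabs_pos_eq, pos_INR. Qed.

Lemma rho_bound R k w : 0 < R -> (forall j, (j < k)%nat -> R / 2 <= Cmod (w - xj j)%C) ->
  Cmod (rho k w) <= 2 ^ k / R ^ k.
Proof.
  intros HR. induction k; intros H; simpl.
  - rewrite Cmod_1. right. field.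
  - rewrite Cmod_mult.
    assert (Hk : R / 2 <= Cmod (w - xj k)%C) by (apply H; lia).
    assert (Hnz : (w - xj k)%C <> RtoC 0) by (intro E; rewrite E, Cmod_0 in Hk; lra).
    rewrite Cmod_inv by auto.
    pose proof (pow_lt R k HR).
    apply Rle_trans with (2 ^ k / R ^ k * (2 / R)).
    apply Rmult_le_compat. apply Cmod_ge_0. left; apply Rinv_0_lt_compat; lra.
    apply IHk; intros; apply H; lia.
    replace (2 / R) with (/ (R / 2)) by (field; lra). apply Rinv_le_contravar; lra.
    right. field. lra.
Qed.

Section Liouville2.
Variable f : C -> C.
Hypothesis Hf : forall z, Dif f z.
Variable M : nat.

Definition cR R k := (KR f R k (xj k) / J0)%C.

Lemma repr R u : 0 < R -> Ins R u -> (forall j, (j <= M)%nat -> INR j < R) ->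
  f u = (Csum (S M) (fun k => cR R k * pik k u) + pik (S M) u * KR f R (S M) u / J0)%C.
Proof.
  intros HR Hu Hj.
  pose proof (Ktele f Hf R u (S M) HR Hu ltac:(intros; apply Hj; lia)) as T.
  rewrite K0 in T by auto.
  unfold cR. rewrite (Csum_ext _ _ (fun k => / J0 * (KR f R k (xj k) * pik k u))%C) by (intros; unfold Cdiv; cring).
  rewrite Csum_scal.
  pose proof J0_nz as HJ.
  transitivity (f u * J0 / J0)%C. field; auto.
  rewrite T. field. auto.
Qed.

Lemma repr_node R m : 0 < R -> (forall j, (j <= M)%nat -> INR j < R) -> (m <= M)%nat ->
  f (xj m) = Csum (S M) (fun k => cR R k * pik k (xj m))%C.
Proof.
  intros HR Hj Hm. rewrite (repr R (xj m)) by (auto; apply xj_ins; auto).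
  rewrite pik_node by lia. unfold Cdiv. rewrite !Cmult_0_l, Cplus_0_r. reflexivity.
Qed.

Lemma coef_indep R R' : 0 < R -> 0 < R' -> (forall j, (j <= M)%nat -> INR j < R) ->
  (forall j, (j <= M)%nat -> INR j < R') -> forall k, (k <= M)%nat -> cR R k = cR R' k.
Proof.
  intros HR HR' Hj Hj'.
  set (d := fun k => (cR R k - cR R' k)%C).
  assert (Hsum : forall m, (m <= M)%nat -> Csum (S M) (fun k => d k * pik k (xj m))%C = RtoC 0).
  { intros m Hm. unfold d.
    rewrite (Csum_ext _ _ (fun k => cR R k * pik k (xj m) - cR R' k * pik k (xj m))%C) by (intros; cring).
    rewrite Csum_minus, <- !repr_node by auto. cring. }
  assert (Hall : forall m, (m <= S M)%nat -> forall k, (k < m)%nat -> d k = RtoC 0).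
  { induction m; intros Hm k Hk. lia.
    destruct (Nat.eq_dec k m) as [->|Hne]; [|apply IHm; lia].
    specialize (Hsum m ltac:(lia)).
    rewrite (Csum_tail (S m) (S M)) in Hsum.
    2: lia. 2: { intros k' Hk'. rewrite pik_node by lia. cring. }
    rewrite Csum_S, Csum_zero in Hsum. 2: { intros k' Hk'. rewrite IHm; try lia. cring. }
    assert (d m * pik m (xj m) = RtoC 0)%C by (rewrite <- Hsum; cring).
    assert (Hp := pik_node_nz m).
    replace (d m) with (d m * pik m (xj m) / pik m (xj m))%C by (field; auto).
    rewrite H. unfold Cdiv. apply Cmult_0_l. }
  intros k Hk. assert (d k = RtoC 0) by (apply (Hall (S M)); lia).
  unfold d in H. replace (cR R k) with (cR R k - cR R' k + cR R' k)%C by cring. rewrite H. cring.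
Qed.
End Liouville2.

Lemma KR_bound f M Cc R0 u R : (forall z, Dif f z) -> 0 <= Cc ->
  (forall w, R0 <= Cmod w -> Cmod (f w) <= Cc * Cmod w ^ M) ->
  0 < R -> R0 <= R -> 2 * (INR M + 1) <= R -> 2 * Cmod u <= R ->
  Cmod (KR f R (S M) u) <= 16 * Cc * 4 ^ (S M) / R.
Proof.
  intros Hf HCc Hg HR HR0 HRM Hu.
  assert (Hins : Ins R u) by (apply Cmod_ins; pose proof (Cmod_ge_0 u); lra).
  assert (Hj : forall j, (j <= M)%nat -> INR j < R).
  { intros j Hj. apply le_INR in Hj. lra. }
  set (Mb := Cc * (2 ^ M * R ^ M) * (2 ^ (S M) / R ^ (S M)) * (2 / R)).
  apply Rle_trans with (4 * Mb * ((R - - R) + (R - - R))).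
  - unfold KR. apply RI_bound; try lra.
    + intros w Hw. apply (integrand_cont f Hf R (S M)); auto. intros; apply Hj; lia.
    + intros w Hw. destruct (bd_mod R w ltac:(lra) Hw) as [Hw1 Hw2].
      rewrite !Cmod_mult.
      assert (Hwu : R / 2 <= Cmod (w - u)%C) by (pose proof (Cmod_tri_sub w u); lra).
      assert (Hnz : (w - u)%C <> RtoC 0) by (intro E; rewrite E, Cmod_0 in Hwu; lra).
      rewrite Cmod_inv by auto.
      unfold Mb. apply Rmult_le_compat; try apply Rmult_le_pos; try apply Cmod_ge_0;
        try (left; apply Rinv_0_lt_compat; lra).
      * apply Rmult_le_compat; try apply Cmod_ge_0.
        -- eapply Rle_trans. apply Hg; lra. apply Rmult_le_compat_l; auto.
           rewrite <- Rpow_mult_distr. apply pow_incr. split. apply Cmod_ge_0. lra.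
        -- apply rho_bound; auto. intros j Hjk.
           pose proof (Cmod_tri_sub w (xj j)). rewrite Cmod_xj in H.
           assert (INR j <= INR M) by (apply le_INR; lia). lra.
      * replace (2 / R) with (/ (R / 2)) by (field; lra). apply Rinv_le_contravar; lra.
  - unfold Mb. right. replace (4 ^ S M) with (2 ^ S M * 2 ^ S M) by (rewrite <- Rpow_mult_distr; f_equal; lra). simpl. field.
    split. lra. apply pow_nonzero. lra.
Qed.

Lemma PF_pik k : PolyFun (pik k).
Proof.
  induction k; simpl. apply PF_const.
  apply PF_mul; auto. eapply PF_ext. apply PF_add. apply PF_id. apply (PF_const (- xj k)%C).
  intros; cbv beta; cring.
Qed.

Theorem growth_poly f : (forall z, Dif f z) ->
  (exists Cc M R0, 0 <= Cc /\ (forall w, R0 <= Cmod w -> Cmod (f w) <= Cc * Cmod w ^ M)) ->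
  PolyFun f.
Proof.
  intros Hf [Cc [M [R0 [HCc Hg]]]].
  set (R1 := INR M + 1).
  assert (HR1 : 0 < R1) by (unfold R1; pose proof (pos_INR M); lra).
  assert (Hj1 : forall j, (j <= M)%nat -> INR j < R1) by (intros j Hj; apply le_INR in Hj; unfold R1; lra).
  set (N := fun u => Csum (S M) (fun k => cR f R1 k * pik k u)%C).
  apply PF_ext with N.
  { unfold N. apply PF_Csum. intros k. apply PF_mul. apply PF_const. apply PF_pik. }
  intros u. symmetry.
  set (Rb := Rmax (Rmax R0 (2 * (INR M + 1))) (2 * Cmod u) + 1).
  assert (HRb : 0 < Rb).
  { unfold Rb. pose proof (Rmax_r (Rmax R0 (2 * (INR M + 1))) (2 * Cmod u)). pose proof (Cmod_ge_0 u). lra. }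
  pose proof (Rmax_l (Rmax R0 (2 * (INR M + 1))) (2 * Cmod u)) as Q1.
  pose proof (Rmax_r (Rmax R0 (2 * (INR M + 1))) (2 * Cmod u)) as Q2.
  pose proof (Rmax_l R0 (2 * (INR M + 1))) as Q3. pose proof (Rmax_r R0 (2 * (INR M + 1))) as Q4.
  assert (HRbdef : Rb = Rmax (Rmax R0 (2 * (INR M + 1))) (2 * Cmod u) + 1) by reflexivity.
  pose proof (pos_INR M) as HMpos.
  pose proof J0_nz as HJ. assert (HJm : 0 < Cmod J0) by (apply Cmod_gt_0; auto).
  replace (f u) with ((f u - N u) + N u)%C by cring.
  assert (E : (f u - N u)%C = RtoC 0).
  { apply Cmod_eq_0. apply (le_eps0 _ (Cmod (pik (S M) u) * (16 * Cc * 4 ^ (S M)) / Cmod J0) (/ Rb)).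
    apply Cmod_ge_0.
    { apply Rmult_le_pos. apply Rmult_le_pos. apply Cmod_ge_0. apply Rmult_le_pos. lra. apply pow_le; lra.
      left; apply Rinv_0_lt_compat; auto. }
    apply Rinv_0_lt_compat; auto.
    intros eps [He1 He2].
    set (R := / eps).
    assert (HR : Rb < R). { unfold R. replace Rb with (/ / Rb) by (field; lra). apply Rinv_lt_contravar; auto. apply Rmult_lt_0_compat; auto. apply Rinv_0_lt_compat; auto. }
    assert (HRpos : 0 < R) by lra.
    assert (Hj : forall j, (j <= M)%nat -> INR j < R) by (intros j Hj; apply le_INR in Hj; pose proof (pos_INR M); lra).
    assert (Hins : Ins R u) by (apply Cmod_ins; pose proof (Cmod_ge_0 u); lra).
    rewrite (repr f Hf M R u) by auto.
    unfold N. rewrite (Csum_ext _ _ (fun k => cR f R1 k * pik k u)%C).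
    2: { intros k Hk. rewrite (coef_indep f Hf M R R1); auto. lia. }
    replace (Csum (S M) (fun k => cR f R1 k * pik k u) + pik (S M) u * KR f R (S M) u / J0 -
      Csum (S M) (fun k => cR f R1 k * pik k u))%C with (pik (S M) u * KR f R (S M) u / J0)%C by cring.
    unfold Cdiv. rewrite !Cmod_mult, Cmod_inv by auto.
    pose proof (KR_bound f M Cc R0 u R Hf HCc Hg HRpos ltac:(lra) ltac:(lra) ltac:(lra)) as HK.
    replace (eps * (Cmod (pik (S M) u) * (16 * Cc * 4 ^ S M) / Cmod J0)) with
      (Cmod (pik (S M) u) * (16 * Cc * 4 ^ S M / R) * / Cmod J0) by (unfold R; field; split; lra).
    apply Rmult_le_compat_r. left; apply Rinv_0_lt_compat; auto.
    apply Rmult_le_compat_l. apply Cmod_ge_0. auto. }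
  rewrite E. cring.
Qed.

Lemma DCpow_S z n : Defs.Cpow z (S n) = (z * Defs.Cpow z n)%C.
Proof. reflexivity. Qed.
Lemma DCpow_0 z : Defs.Cpow z 0 = RtoC 1.
Proof. reflexivity. Qed.

Lemma coef_nil k : coef nil k = C0.
Proof. destruct k; reflexivity. Qed.
Lemma coef_cons0 a q : coef (a :: q) 0 = a.
Proof. reflexivity. Qed.
Lemma coef_consS a q k : coef (a :: q) (S k) = coef q k.
Proof. reflexivity. Qed.

Lemma peval_zero_coefs q : (forall k, coef q k = C0) -> forall z, peval q z = RtoC 0.
Proof.
  induction q as [|a q IH]; intros H z. reflexivity.
  rewrite peval_cons. pose proof (H 0%nat) as H0. rewrite coef_cons0 in H0. rewrite H0, IH.
  rewrite C0_eq. cring. intros k. rewrite <- (coef_consS a q k). apply H.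
Qed.

Lemma pow_ge1 x n : 1 <= x -> 1 <= x ^ n.
Proof. intros H. induction n. simpl; lra. simpl. nra. Qed.

Lemma peval_lb p k : coef p k <> C0 -> exists c e R0, 0 < c /\ 0 < R0 /\ (k <= e)%nat /\
  forall z, R0 <= Cmod z -> c * Cmod z ^ e <= Cmod (peval p z).
Proof.
  revert k. induction p as [|a q IH]; intros k Hk.
  - rewrite coef_nil in Hk. congruence.
  - destruct (classic (exists k', coef q k' <> C0)) as [[k' Hk']|Hno].
    + set (k'' := match k with O => k' | S j => j end).
      assert (Hk'' : coef q k'' <> C0) by (unfold k''; destruct k; auto).
      destruct (IH k'' Hk'') as [c [e [R0 [Hc [HR0 [Hke Hb]]]]]].
      pose proof (Cmod_ge_0 a) as Ha.
      exists (c / 2), (S e), (Rmax (Rmax R0 1) (2 * Cmod a / c)).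
      pose proof (Rmax_l (Rmax R0 1) (2 * Cmod a / c)). pose proof (Rmax_r (Rmax R0 1) (2 * Cmod a / c)).
      pose proof (Rmax_l R0 1). pose proof (Rmax_r R0 1).
      repeat split; try lra. destruct k; unfold k'' in Hke; lia.
      intros z Hz. rewrite peval_cons.
      assert (Hz1 : 1 <= Cmod z) by lra.
      specialize (Hb z ltac:(lra)).
      pose proof (Cmod_tri_sub (z * peval q z)%C (- a)%C).
      rewrite Cmod_opp, Cmod_mult in H3.
      replace (z * peval q z - - a)%C with (a + z * peval q z)%C in H3 by cring.
      assert (Hza : 2 * Cmod a <= c * Cmod z).
      { assert (Hza0 : 2 * Cmod a / c <= Cmod z) by lra.
        replace (2 * Cmod a) with ((2 * Cmod a / c) * c) by (field; lra).
        rewrite Rmult_comm. apply Rmult_le_compat_l; lra. }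
      pose proof (pow_ge1 (Cmod z) e Hz1).
      simpl. assert (c * Cmod z <= c * (Cmod z * Cmod z ^ e)) by (apply Rmult_le_compat_l; nra).
      assert (Cmod z * (c * Cmod z ^ e) <= Cmod z * Cmod (peval q z)) by (apply Rmult_le_compat_l; lra).
      nra.
    + assert (Hq : forall k', coef q k' = C0) by (intros k'; destruct (classic (coef q k' = C0)); auto; exfalso; apply Hno; eauto).
      destruct k as [|k]. 2: { rewrite coef_consS in Hk. congruence. }
      rewrite coef_cons0 in Hk.
      exists (Cmod a), 0%nat, 1. repeat split; try lra; try lia.
      apply Cmod_gt_0. intro E; apply Hk; rewrite E; reflexivity.
      intros z _. rewrite peval_cons, (peval_zero_coefs q Hq), pow_O, Rmult_1_r, Cmult_0_r, Cplus_0_r. lra.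
Qed.

Lemma peval_ub p : exists B, 0 <= B /\ forall z, Cmod (peval p z) <= B * (1 + Cmod z) ^ length p.
Proof.
  induction p as [|a q [B [HB Hb]]].
  - exists 0. split; [lra|]. intros z. rewrite peval_nil, Cmod_0. simpl. lra.
  - exists (Cmod a + B). split. pose proof (Cmod_ge_0 a); lra.
    intros z. rewrite peval_cons. simpl length.
    eapply Rle_trans. apply Cmod_triangle. rewrite Cmod_mult.
    pose proof (Cmod_ge_0 z). pose proof (Cmod_ge_0 a).
    pose proof (pow_ge1 (1 + Cmod z) (length q) ltac:(lra)).
    specialize (Hb z). simpl.
    assert (Cmod z * Cmod (peval q z) <= (1 + Cmod z) * (B * (1 + Cmod z) ^ length q)).
    { apply Rmult_le_compat; try lra; apply Cmod_ge_0. }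
    set (X := (1 + Cmod z) ^ length q) in *.
    assert (H4 : 1 <= (1 + Cmod z) * X) by nra.
    assert (H5 : Cmod a <= Cmod a * ((1 + Cmod z) * X)) by nra.
    replace ((Cmod a + B) * ((1 + Cmod z) * X)) with (Cmod a * ((1 + Cmod z) * X) + (1 + Cmod z) * (B * X)) by ring.
    lra.
Qed.

Lemma peval_zero_fun p : (forall z, peval p z = RtoC 0) -> forall k, coef p k = C0.
Proof.
  intros H k. destruct (classic (coef p k = C0)) as [E|E]; auto. exfalso.
  destruct (peval_lb p k E) as [c [e [R0 [Hc [HR0 [_ Hb]]]]]].
  specialize (Hb (RtoC R0)). rewrite Cmod_R, Rabs_pos_eq in Hb by lra.
  specialize (Hb (Rle_refl _)). rewrite H, Cmod_0 in Hb.
  pose proof (pow_lt R0 e HR0). nra.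
Qed.

Lemma Csum_shift n (F : nat -> C) : Csum (S n) F = (F 0%nat + Csum n (fun i => F (S i)))%C.
Proof.
  induction n. rewrite Csum_S, !Csum_0. cring.
  rewrite Csum_S, IHn, (Csum_S n (fun i => F (S i))). cring.
Qed.

Lemma Csum_scal_r n (F : nat -> C) (c : C) : Csum n (fun k => F k * c)%C = (Csum n F * c)%C.
Proof. induction n. rewrite !Csum_0. cring. rewrite !Csum_S, IHn. cring. Qed.

Lemma peval_mk (g : nat -> C) n : forall s z,
  peval (map g (seq s n)) z = Csum n (fun i => g (s + i)%nat * Defs.Cpow z i)%C.
Proof.
  induction n; intros s z. simpl. reflexivity.
  simpl seq. simpl map. rewrite peval_cons, IHn, Csum_shift.
  rewrite DCpow_0, Nat.add_0_r. rewrite <- Csum_scal.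
  rewrite (Csum_ext _ (fun k => z * (g (S s + k)%nat * Defs.Cpow z k))%C (fun i => g (s + S i)%nat * Defs.Cpow z (S i))%C).
  cring. intros k _. rewrite DCpow_S. replace (s + S k)%nat with (S s + k)%nat by lia. cring.
Qed.

Lemma coef_mk (g : nat -> C) n i : (i < n)%nat -> coef (map g (seq 0 n)) i = g i.
Proof.
  intros H. unfold coef. rewrite (nth_indep _ _ (g 0%nat)).
  rewrite map_nth, seq_nth; auto.
  rewrite length_map, length_seq. auto.
Qed.

Lemma beval_zero N c : (forall X Y, beval N c X Y = RtoC 0) ->
  forall i j, (i <= N)%nat -> (j <= N)%nat -> c i j = C0.
Proof.
  intros H i j Hi Hj.
  assert (H1 : forall Y, forall i, (i <= N)%nat -> Csum (S N) (fun j => c i j * Defs.Cpow Y j)%C = RtoC 0).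
  { intros Y i' Hi'.
    set (p := map (fun i => Csum (S N) (fun j => c i j * Defs.Cpow Y j)%C) (seq 0 (S N))).
    assert (Hp : forall X, peval p X = RtoC 0).
    { intros X. unfold p. rewrite peval_mk. rewrite <- (H X Y). unfold beval.
      apply Csum_ext. intros k _. simpl plus. rewrite <- Csum_scal_r.
      apply Csum_ext. intros l _. replace (0 + k)%nat with k by lia. cring. }
    pose proof (peval_zero_fun p Hp i') as E. unfold p in E. rewrite coef_mk in E by lia.
    rewrite E. reflexivity. }
  set (q := map (fun j => c i j) (seq 0 (S N))).
  assert (Hq : forall Y, peval q Y = RtoC 0).
  { intros Y. unfold q. rewrite peval_mk. simpl plus. apply H1. auto. }
  pose proof (peval_zero_fun q Hq j) as E. unfold q in E. rewrite coef_mk in E by lia. auto.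
Qed.

Definition BPoly := list Cpoly.
Fixpoint beval2 (H : BPoly) (d Y : C) : C :=
  match H with nil => RtoC 0 | h :: H' => (peval h d + Y * beval2 H' d Y)%C end.
Fixpoint badd (H K : BPoly) : BPoly :=
  match H, K with
  | nil, _ => K
  | _, nil => H
  | h :: H', k :: K' => padd h k :: badd H' K'
  end.
Lemma beval2_badd H K d Y : beval2 (badd H K) d Y = (beval2 H d Y + beval2 K d Y)%C.
Proof.
  revert K. induction H as [|h H IH]; intros [|k K]; simpl badd; simpl beval2; try cring.
  rewrite peval_padd, IH. cring.
Qed.
Lemma beval2_bscale p K d Y : beval2 (map (pmul p) K) d Y = (peval p d * beval2 K d Y)%C.
Proof. induction K as [|k K IH]; simpl. cring. rewrite peval_pmul, IH. cring. Qed.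
Fixpoint bmul (H K : BPoly) : BPoly :=
  match H with nil => nil | h :: H' => badd (map (pmul h) K) (nil :: bmul H' K) end.
Lemma beval2_bmul H K d Y : beval2 (bmul H K) d Y = (beval2 H d Y * beval2 K d Y)%C.
Proof.
  induction H as [|h H IH]; simpl bmul. simpl. cring.
  rewrite beval2_badd, beval2_bscale. simpl beval2. rewrite IH. cring.
Qed.

Definition BPF (G : C -> C -> C) : Prop := exists H, forall d Y, G d Y = beval2 H d Y.

Lemma BPF_ext G K : BPF G -> (forall d Y, G d Y = K d Y) -> BPF K.
Proof. intros [H HH] E. exists H. intros. rewrite <- E. auto. Qed.
Lemma BPF_d g : PolyFun g -> BPF (fun d Y => g d).
Proof. intros [p Hp]. exists (p :: nil). intros. cbn [beval2]. rewrite Hp. cring. Qed.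
Lemma BPF_Y : BPF (fun d Y => Y).
Proof. exists (nil :: (Defs.C1 :: nil) :: nil). intros. cbn [beval2]. rewrite !peval_cons, !peval_nil. unfold Defs.C1. change (1, 0) with (RtoC 1). cring. Qed.
Lemma BPF_add G K : BPF G -> BPF K -> BPF (fun d Y => G d Y + K d Y)%C.
Proof. intros [H HH] [L HL]. exists (badd H L). intros. rewrite beval2_badd, HH, HL. auto. Qed.
Lemma BPF_mul G K : BPF G -> BPF K -> BPF (fun d Y => G d Y * K d Y)%C.
Proof. intros [H HH] [L HL]. exists (bmul H L). intros. rewrite beval2_bmul, HH, HL. auto. Qed.
Lemma BPF_const c : BPF (fun d Y => c).
Proof. apply (BPF_d (fun _ => c)). apply PF_const. Qed.
Lemma BPF_Csum n (F : nat -> C -> C -> C) : (forall k, BPF (F k)) -> BPF (fun d Y => Csum n (fun k => F k d Y)).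
Proof.
  intros H. induction n. eapply BPF_ext. apply (BPF_const (RtoC 0)). intros; reflexivity.
  eapply BPF_ext. apply BPF_add. apply IHn. apply H. intros. rewrite Csum_S. auto.
Qed.
Lemma BPF_pow G n : BPF G -> BPF (fun d Y => Defs.Cpow (G d Y) n).
Proof.
  intros HG. induction n. eapply BPF_ext. apply (BPF_const (RtoC 1)). intros; reflexivity.
  eapply BPF_ext. apply BPF_mul. apply HG. apply IHn. intros. rewrite DCpow_S. auto.
Qed.

Lemma BPF_F N c : BPF (fun d Y => beval N c (Y + d)%C Y).
Proof.
  unfold beval. apply BPF_Csum. intros i. apply BPF_Csum. intros j.
  eapply BPF_ext. apply BPF_mul. apply BPF_const. apply BPF_mul.
  apply BPF_pow. apply BPF_add. apply BPF_Y. apply BPF_d. apply PF_id.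
  apply BPF_pow. apply BPF_Y. intros. reflexivity.
Qed.

Definition BNZ (H : BPoly) : Prop := exists k i, coef (nth k H nil) i <> C0.

Lemma beval2_nz H : ~ BNZ H -> forall d Y, beval2 H d Y = RtoC 0.
Proof.
  induction H as [|h H IH]; intros Hn d Y. reflexivity.
  simpl. rewrite (peval_zero_coefs h), IH. cring.
  intros [k [i Hki]]. apply Hn. exists (S k), i. auto.
  intros i. destruct (classic (coef h i = C0)); auto. exfalso. apply Hn. exists 0%nat, i. auto.
Qed.

Lemma bgrowth H : BNZ H -> exists Cg E D0 cg m, 0 <= Cg /\ 1 <= D0 /\ 0 < cg /\
  forall d Y, D0 <= Cmod d -> Cg * Cmod d ^ E <= Cmod Y -> 1 <= Cmod Y ->
    cg * Cmod Y ^ m <= Cmod (beval2 H d Y).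
Proof.
  induction H as [|h H IH]; intros Hnz.
  - exfalso. destruct Hnz as [k [i Hk]]. destruct k; simpl in Hk; rewrite coef_nil in Hk; auto.
  - destruct (classic (BNZ H)) as [HB|HB].
    + destruct (IH HB) as [Cg [E [D0 [cg [m [HCg [HD0 [Hcg Hb]]]]]]]].
      destruct (peval_ub h) as [B [HB0 Hub]].
      set (L := length h) in *.
      pose proof (pow_lt 2 L ltac:(lra)) as P2.
      exists (Cg + 2 * B * 2 ^ L / cg), (E + L)%nat, D0, (cg / 2), (S m).
      assert (0 <= 2 * B * 2 ^ L / cg) by (apply Rcomplements.Rdiv_le_0_compat; nra).
      repeat split; try lra.
      intros d Y Hd HY HY1. simpl beval2.
      assert (Hd1 : 1 <= Cmod d) by lra.
      pose proof (Rle_pow (Cmod d) E (E + L) Hd1 ltac:(lia)) as PE.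
      pose proof (Rle_pow (Cmod d) L (E + L) Hd1 ltac:(lia)) as PL.
      pose proof (pow_ge1 (Cmod d) E Hd1). pose proof (pow_ge1 (Cmod d) L Hd1).
      assert (HY2 : Cg * Cmod d ^ E <= Cmod Y).
      { eapply Rle_trans; [|exact HY]. apply Rmult_le_compat; lra. }
      assert (HY3 : 2 * B * 2 ^ L / cg * Cmod d ^ L <= Cmod Y).
      { eapply Rle_trans; [|exact HY]. apply Rmult_le_compat; lra. }
      specialize (Hb d Y Hd HY2 HY1).
      assert (Hh : Cmod (peval h d) <= cg / 2 * Cmod Y).
      { eapply Rle_trans. apply Hub.
        apply Rle_trans with (B * (2 ^ L * Cmod d ^ L)).
        apply Rmult_le_compat_l; auto. rewrite <- Rpow_mult_distr. apply pow_incr. pose proof (Cmod_ge_0 d). lra.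
        replace (B * (2 ^ L * Cmod d ^ L)) with (cg / 2 * (2 * B * 2 ^ L / cg * Cmod d ^ L)) by (field; lra).
        apply Rmult_le_compat_l; lra. }
      pose proof (Cmod_tri_sub (Y * beval2 H d Y)%C (- peval h d)%C) as T.
      rewrite Cmod_opp, Cmod_mult in T.
      replace (Y * beval2 H d Y - - peval h d)%C with (peval h d + Y * beval2 H d Y)%C in T by cring.
      pose proof (pow_ge1 (Cmod Y) m HY1).
      assert (Cmod Y * (cg * Cmod Y ^ m) <= Cmod Y * Cmod (beval2 H d Y)) by (apply Rmult_le_compat_l; lra).
      assert (cg * Cmod Y <= cg * (Cmod Y * Cmod Y ^ m)) by (apply Rmult_le_compat_l; nra).
      simpl. nra.
    + destruct Hnz as [k [i Hk]].
      destruct k as [|k]. 2: { exfalso. apply HB. exists k, i. auto. }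
      simpl in Hk.
      destruct (peval_lb h i Hk) as [c [e [R0 [Hc [HR0 [_ Hlb]]]]]].
      exists 0, 0%nat, (Rmax R0 1), c, 0%nat.
      pose proof (Rmax_l R0 1). pose proof (Rmax_r R0 1).
      repeat split; try lra.
      intros d Y Hd _ _. simpl beval2. rewrite (beval2_nz H HB).
      replace (peval h d + Y * 0)%C with (peval h d) by cring.
      eapply Rle_trans; [|apply Hlb; lra]. rewrite pow_O, Rmult_1_r.
      rewrite <- (Rmult_1_r c) at 1. apply Rmult_le_compat_l; try lra. apply pow_ge1. lra.
Qed.

Lemma coef_padd p q k : coef (padd p q) k = (coef p k + coef q k)%C.
Proof.
  revert q k. induction p as [|a p IH]; intros [|b q] k; simpl padd.
  - rewrite !coef_nil. cring.
  - rewrite coef_nil. cring.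
  - rewrite coef_nil. cring.
  - destruct k. rewrite !coef_cons0. reflexivity. rewrite !coef_consS. apply IH.
Qed.

Lemma coef_pscale a p k : coef (pscale a p) k = (a * coef p k)%C.
Proof.
  revert k. induction p as [|b p IH]; intros k; simpl.
  - rewrite !coef_nil. cring.
  - destruct k. reflexivity. rewrite !coef_consS. apply IH.
Qed.

Lemma growth_bound_aux (x D Bd : R) (n : nat) : 1 <= x -> 0 <= Bd -> 0 <= D -> D <= Bd * (1 + x) ^ n ->
  D <= Bd * 2 ^ n * x ^ n.
Proof.
  intros Hx HB HD H. eapply Rle_trans. apply H. rewrite Rmult_assoc, <- Rpow_mult_distr.
  apply Rmult_le_compat_l; auto. apply pow_incr. lra.
Qed.

Theorem mainTheorem10 (f : Cx -> Cx) (P Q : Cpoly) :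
  transcendental_entire f ->
  diff_nonconstant P Q ->
  alg_independent (fun z => Cadd (f z) (peval P z))
                  (fun z => Cadd (f z) (peval Q z)).
Proof.
  intros [Hent Hnt] [k0 [Hk0 Hk0ne]] N c Hc.
  apply NNPP. intros Hall.
  assert (Hz : forall z, beval N c (Cadd (f z) (peval P z)) (Cadd (f z) (peval Q z)) = C0).
  { intros z. apply NNPP. intro Hne. apply Hall. exists z. auto. }
  clear Hall.
  pose proof (entire_Dif f Hent) as HD.
  apply Hnt. apply (growth_poly f HD).
  destruct (BPF_F N c) as [H HH].
  assert (HB : BNZ H).
  { apply NNPP. intro HnB.
    assert (Hz0 : forall X Y, beval N c X Y = RtoC 0).
    { intros X Y. replace X with (Y + (X - Y))%C by cring. rewrite HH. apply beval2_nz; auto. }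
    destruct Hc as [i [j [Hi [Hj Hij]]]]. apply Hij. apply (beval_zero N c Hz0); auto. }
  destruct (bgrowth H HB) as [Cg [E [D0 [cg [m [HCg [HD0 [Hcg Hb]]]]]]]].
  set (Rl := padd P (pscale (RtoC (-1)) Q)).
  assert (HRl : forall z, peval Rl z = (peval P z - peval Q z)%C).
  { intros z. unfold Rl. rewrite peval_padd, peval_pscale. cring. }
  assert (HRk : coef Rl k0 <> C0).
  { unfold Rl. rewrite coef_padd, coef_pscale. intro E0. apply Hk0ne.
    replace (coef P k0) with (coef P k0 + RtoC (-1) * coef Q k0 + coef Q k0)%C by cring.
    rewrite E0. cring. }
  destruct (peval_lb Rl k0 HRk) as [cR [eR [RR [HcR [HRR [HkeR HlbR]]]]]].
  destruct (peval_ub Rl) as [BR [HBR HubR]].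
  destruct (peval_ub Q) as [BQ [HBQ HubQ]].
  set (LR := length Rl) in *. set (LQ := length Q) in *.
  pose proof (pow_lt 2 LR ltac:(lra)) as P2R. pose proof (pow_lt 2 LQ ltac:(lra)) as P2Q.
  set (K1 := (BR * 2 ^ LR) ^ E).
  assert (HK1 : 0 <= K1) by (unfold K1; apply pow_le; nra).
  exists (1 + Cg * K1 + BQ * 2 ^ LQ), (LR * E + LQ)%nat, (Rmax (Rmax 1 RR) (D0 / cR)).
  split. { assert (0 <= Cg * K1) by nra. assert (0 <= BQ * 2 ^ LQ) by nra. lra. }
  intros w Hw.
  pose proof (Rmax_l (Rmax 1 RR) (D0 / cR)) as Q1. pose proof (Rmax_r (Rmax 1 RR) (D0 / cR)) as Q2.
  pose proof (Rmax_l 1 RR) as Q3. pose proof (Rmax_r 1 RR) as Q4.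
  assert (Hw1 : 1 <= Cmod w) by lra.
  set (d := peval Rl w). set (Y := Cadd (f w) (peval Q w)).
  assert (Hd : D0 <= Cmod d).
  { unfold d. eapply Rle_trans; [|apply HlbR; lra].
    pose proof (Rle_pow (Cmod w) 1 eR Hw1 ltac:(lia)) as PW. rewrite pow_1 in PW.
    apply Rle_trans with (cR * Cmod w). 2: apply Rmult_le_compat_l; lra.
    replace D0 with (D0 / cR * cR) by (field; lra). rewrite (Rmult_comm cR). apply Rmult_le_compat_r; lra. }
  assert (HY0 : beval2 H d Y = RtoC 0).
  { rewrite <- HH. unfold d, Y. rewrite HRl.
    replace (Cadd (f w) (peval Q w) + (peval P w - peval Q w))%C with (Cadd (f w) (peval P w)) by cring.
    rewrite Hz. reflexivity. }
  assert (HYb : Cmod Y <= 1 + Cg * Cmod d ^ E).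
  { destruct (Rle_dec (Cmod Y) (1 + Cg * Cmod d ^ E)) as [Hle|Hgt]; auto. exfalso.
    assert (0 <= Cg * Cmod d ^ E) by (apply Rmult_le_pos; auto; apply pow_le, Cmod_ge_0).
    specialize (Hb d Y Hd ltac:(lra) ltac:(lra)). rewrite HY0, Cmod_0 in Hb.
    pose proof (pow_lt (Cmod Y) m ltac:(lra)). nra. }
  assert (Hdb : Cmod d <= BR * 2 ^ LR * Cmod w ^ LR).
  { apply growth_bound_aux; auto; try apply Cmod_ge_0; try apply HubR. }
  assert (HdE : Cmod d ^ E <= K1 * Cmod w ^ (LR * E)).
  { unfold K1. rewrite pow_mult, <- Rpow_mult_distr. apply pow_incr. split. apply Cmod_ge_0. auto. }
  assert (HQb : Cmod (peval Q w) <= BQ * 2 ^ LQ * Cmod w ^ LQ).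
  { apply growth_bound_aux; auto; try apply Cmod_ge_0; try apply HubQ. }
  assert (Hf : Cmod (f w) <= Cmod Y + Cmod (peval Q w)).
  { replace (f w) with (Y - peval Q w)%C by (unfold Y; cring). apply Cmod_sub_le. }
  pose proof (Rle_pow (Cmod w) (LR * E) (LR * E + LQ) Hw1 ltac:(lia)) as PA.
  pose proof (Rle_pow (Cmod w) LQ (LR * E + LQ) Hw1 ltac:(lia)) as PB.
  pose proof (pow_ge1 (Cmod w) (LR * E + LQ) Hw1) as PC.
  set (W := Cmod w ^ (LR * E + LQ)) in *.
  assert (Cg * Cmod d ^ E <= Cg * K1 * W).
  { rewrite Rmult_assoc. apply Rmult_le_compat_l; auto. eapply Rle_trans. apply HdE. apply Rmult_le_compat_l; auto. }
  assert (BQ * 2 ^ LQ * Cmod w ^ LQ <= BQ * 2 ^ LQ * W) by (apply Rmult_le_compat_l; nra).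
  assert (1 <= 1 * W) by lra.
  replace ((1 + Cg * K1 + BQ * 2 ^ LQ) * W) with (1 * W + Cg * K1 * W + BQ * 2 ^ LQ * W) by ring.
  lra.
Qed.
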